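(* Let $L=\mathbb{Z}\alpha$ with $\langle\alpha,\alpha\rangle=-2k$, $k\in\mathbb{Z}_{>0}$, and let $m\in\mathbb{Z}_{>0}$. In $V_L^+$, consider the elements $f_1=\alpha(-5)F^m$, $f_2=\alpha(-4)\alpha(-1)E^m$, $f_3=\alpha(-3)\alpha(-2)E^m$, $f_4=\alpha(-3)\alpha(-1)^2F^m$, $f_5=\alpha(-2)^2\alpha(-1)F^m$, $f_6=\alpha(-2)\alpha(-1)^3E^m$, $f_7=\alpha(-1)^5F^m$ and $h_1=\alpha(-3)F^m$, $h_2=\alpha(-2)\alpha(-1)E^m$, $h_3=\alpha(-1)^3F^m$. Then the eleven vectors $L(-1)f_i$ ($1\le i\le 7$), $L(-3)h_j$ ($1\le j\le 3$) and $(\alpha(-1)^4\mathbf{1})_{-3}E^m$ form a basis of the weight space $V_L^+(m,-km^2+6)$.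
   Context: Let $L$ be an even lattice with non-degenerate symmetric $\mathbb{Z}$-bilinear form $\langle\cdot,\cdot\rangle$, $\mathfrak{h}=\mathbb{C}\otimes_{\mathbb{Z}}L$, $M(1)$ the Heisenberg vertex algebra (free bosons) generated by $h(-n)$, $h\in\mathfrak{h}$, $n>0$, with $[h(m),h'(n)]=m\langle h,h'\rangle\delta_{m+n,0}$, and $V_L=M(1)\otimes\mathbb{C}[L]$ the lattice vertex algebra (defined with a 2-cocycle on $L$), with conformal vector $\omega=\frac12\sum_i h_i(-1)^2\mathbf{1}$ for an orthonormal basis $\{h_i\}$ of $\mathfrak{h}$, $Y(\omega,z)=\sum_nL(n)z^{-n-2}$. The weight of $\beta_1(-n_1)\cdots\beta_r(-n_r)e^{\beta}$ is $n_1+\cdots+n_r+\langle\beta,\beta\rangle/2$. Let $\theta$ be the automorphism of $V_L$ with $\theta(\beta_1(-n_1)\cdots\beta_r(-n_r)e^{\beta})=(-1)^r\beta_1(-n_1)\cdots\beta_r(-n_r)e^{-\beta}$; $V_L^+$ (resp. $M(1)^\pm$) denotes the $+1$-eigenspace of $\theta$ on $V_L$ (resp. $\pm1$-eigenspaces on $M(1)$). For $u\in V_L$, $Y(u,z)=\sum_n u_nz^{-n-1}$. For $L=\mathbb{Z}\alpha$ and $m\in\mathbb{Z}_{>0}$, set $E^m=e^{m\alpha}+e^{-m\alpha}$, $F^m=e^{m\alpha}-e^{-m\alpha}$, $V_L^+(m)=M(1)^+\otimes E^m\oplus M(1)^-\otimes F^m$, and $V_L^+(m,n)$ the weight-$n$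 subspace of $V_L^+(m)$. An expression like $\alpha(-2)\alpha(-1)E^m$ means $\alpha(-2)\alpha(-1)\mathbf{1}\otimes E^m$. *)

(* Defs.v *)
(* Concrete model of the rank-one lattice vertex algebra
   V_L = M(1) (x) C[L], L = Z alpha, <alpha,alpha> = a2, over algC (the
   MathComp model of the complex numbers).

   A basis vector  alpha(-n_1)...alpha(-n_r) (x) e^{b alpha}  is encoded by the
   key (s, b) with s = [:: n_1; ...; n_r] (a multiset of positive integers;
   keys are compared up to permutation, since M(1) is commutative).
   A vector is a finite formal linear combination (a list of coefficient/key
   pairs); its actual value is read off by [coef]. *)
From mathcomp Require Import all_boot all_order all_algebra all_field.
Set Implicit Arguments. Unset Strict Implicit. Unset Printing Implicit Defensive.
Import Order.TTheory GRing.Theory Num.Theory.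
Local Open Scope ring_scope.

Definition key := (seq nat * int)%type.
Definition vec := seq (algC * key).

Definition vscale (c : algC) (v : vec) : vec := [seq (c * t.1, t.2) | t <- v].
Definition vadd (v w : vec) : vec := v ++ w.

Definition coef (v : vec) (x : key) : algC :=
  \sum_(t <- v | perm_eq t.2.1 x.1 && (t.2.2 == x.2)) t.1.

Definition rem_at (i : nat) (s : seq nat) : seq nat := take i s ++ drop i.+1 s.

(* action of the Heisenberg mode alpha(n) on a basis term:
   alpha(-n), n>0: creation; alpha(0) e^{b alpha} = <alpha, b alpha> e^{b alpha};
   alpha(n), n>0: acts as n <alpha,alpha> d/d alpha(-n). *)
Definition heis_basis (a2 : int) (n : int) (t : algC * key) : vec :=
  let: (c, (s, b)) := t in
  if n < 0 then [:: (c, (absz n :: s, b))]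
  else if n == 0 then [:: (c * (b * a2)%:~R, (s, b))]
  else [seq (c * (n * a2)%:~R, (rem_at i s, b))
         | i <- iota 0 (size s) & nth 0%N s i == absz n].

Definition heis (a2 : int) (n : int) (v : vec) : vec :=
  flatten [seq heis_basis a2 n t | t <- v].

(* normally ordered product :alpha(n_1) ... alpha(n_r): *)
Definition nop (a2 : int) (ns : seq int) (v : vec) : vec :=
  foldr (heis a2) v ([seq n <- ns | n < 0] ++ [seq n <- ns | 0 <= n]).

Definition rangeZ (B : nat) : seq int := [seq (i%:Z - B%:Z) | i <- iota 0 (B.*2.+1)].
Fixpoint tuplesZ (r B : nat) : seq (seq int) :=
  match r with
  | 0 => [:: [::]]
  | r'.+1 => [seq x :: t | x <- rangeZ B, t <- tuplesZ r' B]
  end.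

(* sum_{n_1+...+n_r = N} :alpha(n_1)...alpha(n_r): applied to a basis term;
   the sum is infinite but only the terms with all |n_i| <= weight + |N| can
   act nontrivially, so this truncation is exact. *)
Definition apow_basis (a2 : int) (r : nat) (N : int) (t : algC * key) : vec :=
  let B := (sumn t.2.1 + absz N)%N in
  flatten [seq nop a2 ns [:: t] | ns <- tuplesZ r B & \sum_(x <- ns) x == N].

Definition apow (a2 : int) (r : nat) (N : int) (v : vec) : vec :=
  flatten [seq apow_basis a2 r N t | t <- v].

(* (alpha(-1)^r 1)_p, the p-th mode of Y(alpha(-1)^r 1, z) = :alpha(z)^r: *)
Definition Ymode (a2 : int) (r : nat) (p : int) (v : vec) : vec :=
  apow a2 r (p - r%:Z + 1) v.

(* omega = 1/(2 a2) alpha(-1)^2 1 (= 1/2 h(-1)^2 1 with h orthonormal),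
   L(n) = omega_{n+1} *)
Definition Vir (a2 : int) (n : int) (v : vec) : vec :=
  vscale (2 * a2%:~R)^-1 (Ymode a2 2 (n + 1) v).

Definition creat (a2 : int) (ns : seq nat) (v : vec) : vec :=
  foldr (fun n w => heis a2 (- n%:Z) w) v ns.

Definition eb (b : int) : vec := [:: (1, ([::], b))].
Definition Evec (m : nat) : vec := vadd (eb m%:Z) (eb (- m%:Z)).
Definition Fvec (m : nat) : vec := vadd (eb m%:Z) (vscale (-1) (eb (- m%:Z))).

Definition theta (v : vec) : vec :=
  [seq (t.1 * (-1) ^+ size t.2.1, (t.2.1, - t.2.2)) | t <- v].

(* v lies in V_L^+(m, w): v is theta-invariant, supported on
   M(1) (x) span(e^{m alpha}, e^{-m alpha}) (valid monomials), of weight w.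
   (theta-invariant part of M(1)(x)(C e^{m alpha} + C e^{-m alpha}) is exactly
   M(1)^+ (x) E^m + M(1)^- (x) F^m.) *)
Definition VLplus_weight (a2 : int) (m : nat) (w : algC) (v : vec) : Prop :=
  (forall x, coef (theta v) x = coef v x) /\
  (forall x, coef v x != 0 ->
     [/\ all (fun i => 0 < i)%N x.1,
         (x.2 == m%:Z) || (x.2 == - m%:Z)
       & (sumn x.1)%:R + (x.2 ^+ 2 * a2)%:~R / 2 = w]).

Definition lincomb (n : nat) (c : 'I_n -> algC) (fs : 'I_n -> vec) : vec :=
  flatten [seq vscale (c i) (fs i) | i <- enum 'I_n].

Definition vbasis_of (P : vec -> Prop) (n : nat) (fs : 'I_n -> vec) : Prop :=
  [/\ forall i, P (fs i),
      forall c : 'I_n -> algC,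
        (forall x, coef (lincomb c fs) x = 0) -> forall i, c i = 0
    & forall v, P v -> exists c : 'I_n -> algC,
        forall x, coef v x = coef (lincomb c fs) x].

Section Vecs.
Variables (a2 : int) (m : nat).
Definition f1 := creat a2 [:: 5%N] (Fvec m).
Definition f2 := creat a2 [:: 4%N; 1%N] (Evec m).
Definition f3 := creat a2 [:: 3%N; 2%N] (Evec m).
Definition f4 := creat a2 [:: 3%N; 1%N; 1%N] (Fvec m).
Definition f5 := creat a2 [:: 2%N; 2%N; 1%N] (Fvec m).
Definition f6 := creat a2 [:: 2%N; 1%N; 1%N; 1%N] (Evec m).
Definition f7 := creat a2 [:: 1%N; 1%N; 1%N; 1%N; 1%N] (Fvec m).
Definition h1 := creat a2 [:: 3%N] (Fvec m).
Definition h2 := creat a2 [:: 2%N; 1%N] (Evec m).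
Definition h3 := creat a2 [:: 1%N; 1%N; 1%N] (Fvec m).
Definition lemma4p2_vectors : seq vec :=
  [:: Vir a2 (-1) f1; Vir a2 (-1) f2; Vir a2 (-1) f3; Vir a2 (-1) f4;
      Vir a2 (-1) f5; Vir a2 (-1) f6; Vir a2 (-1) f7;
      Vir a2 (-3) h1; Vir a2 (-3) h2; Vir a2 (-3) h3;
      Ymode a2 4 (-3) (Evec m)].
End Vecs.

(* Main.v *)
Require Import Defs.
From Stdlib Require Import ZArith Ring Lia.
From mathcomp Require Import all_boot all_order all_algebra all_field.
Import GRing.Theory Num.Theory.
Delimit Scope Z_scope with coqZ.
Local Open Scope ring_scope.

Definition zc (z : Z) : algC := (Z.to_nat z)%:R - (Z.to_nat (- z))%:R.

Lemma natsub_eq (x y a b : nat) : addn x b = addn a y -> (x%:R - y%:R : algC) = a%:R - b%:R.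
Proof.
move=> H; apply/eqP; rewrite subr_eq addrAC eq_sym subr_eq -!natrD.
by rewrite addnC H addnC.
Qed.

Lemma zc_rep (z : Z) (a b : nat) : z = (Z.of_nat a - Z.of_nat b)%coqZ -> zc z = a%:R - b%:R.
Proof.
move=> ->; rewrite /zc; apply: natsub_eq; rewrite -!plusE; lia.
Qed.

Lemma zc_add x y : zc (x + y) = zc x + zc y.
Proof.
rewrite (@zc_rep _ (addn (Z.to_nat x) (Z.to_nat y)) (addn (Z.to_nat (-x)) (Z.to_nat (-y)))).
  by rewrite /zc !natrD opprD addrACA.
rewrite -!plusE; lia.
Qed.

Lemma zc_mul x y : zc (x * y) = zc x * zc y.
Proof.
rewrite (@zc_rep _ (addn (muln (Z.to_nat x) (Z.to_nat y)) (muln (Z.to_nat (-x)) (Z.to_nat (-y))))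
                (addn (muln (Z.to_nat x) (Z.to_nat (-y))) (muln (Z.to_nat (-x)) (Z.to_nat y)))).
  rewrite /zc mulrBl !mulrBr -!natrM opprB !natrD opprD !addrA.
  by congr (_ - _); rewrite addrAC.
rewrite -!plusE -!multE; nia.
Qed.

Lemma zc_opp x : zc (- x) = - zc x.
Proof. by rewrite /zc Z.opp_involutive opprB. Qed.

Lemma zc_sub x y : zc (x - y) = zc x - zc y.
Proof. by rewrite -Z.add_opp_r zc_add zc_opp. Qed.
Lemma zc0 : zc 0 = 0. Proof. by rewrite /zc /= subr0. Qed.
Lemma zc1 : zc 1 = 1. Proof. by rewrite /zc /= subr0. Qed.


Definition cadd (x y : algC) : algC := x + y.
Definition cmul (x y : algC) : algC := x * y.
Definition copp (x : algC) : algC := - x.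
Definition csub (x y : algC) : algC := x - y.
Definition czero : algC := 0.
Definition cone : algC := 1.

Lemma algC_rt : @ring_theory algC czero cone cadd cmul csub copp eq.
Proof.
constructor; rewrite /cadd /cmul /csub /copp /czero /cone.
- exact: add0r. - exact: addrC. - exact: addrA. - exact: mul1r. - exact: mulrC.
- exact: mulrA. - exact: mulrDl. - by []. - exact: subrr.
Qed.

Lemma algC_morph : @ring_morph algC czero cone cadd cmul csub copp eq
  Z 0%coqZ 1%coqZ Z.add Z.mul Z.sub Z.opp Z.eqb zc.
Proof.
constructor; rewrite /cadd /cmul /csub /copp /czero /cone.
- exact: zc0. - exact: zc1. - exact: zc_add. - exact: zc_sub. - exact: zc_mul. - exact: zc_opp.
- by move=> x y /Z.eqb_eq ->.
Qed.

Ltac zcst t := match t with zc ?z => constr:(z) | _ => constr:(NotConstant) end.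

Add Ring algCring : algC_rt (morphism algC_morph, constants [zcst]).

Lemma toAdd (x y : algC) : x + y = cadd x y. Proof. by []. Qed.
Lemma toMul (x y : algC) : x * y = cmul x y. Proof. by []. Qed.
Lemma toOpp (x : algC) : - x = copp x. Proof. by []. Qed.
Lemma toZ0 : (0 : algC) = zc 0. Proof. by rewrite zc0. Qed.
Lemma toZ1 : (1 : algC) = zc 1. Proof. by rewrite zc1. Qed.
Ltac aring := rewrite ?toAdd ?toMul ?toOpp ?toZ0 ?toZ1; match goal with |- @eq _ ?a ?b => change (@eq algC a b) end; ring.


Definition sumI (s : seq int) : int := foldr (fun x y => x + y) 0 s.
Lemma sumIE s : \sum_(x <- s) x = sumI s.
Proof. by elim: s => [|a s IH]; rewrite ?big_nil ?big_cons ?IH. Qed.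

Definition mono := (Z * nat * nat)%type.
Definition sterm := (mono * (seq nat * bool))%type.

Fixpoint pw (x : algC) (n : nat) : algC := match n with 0%N => 1 | S n => x * pw x n end.

Definition ltz0 (n : int) : bool := match n with Negz _ => true | _ => false end.
Definition eqz0 (n : int) : bool := match n with Posz 0 => true | _ => false end.

Definition heis_basisS (n : int) (t : sterm) : seq sterm :=
  let: ((z, i, j), (s, sg)) := t in
  if ltz0 n then [:: ((z, i, j), (absz n :: s, sg))]
  else if eqz0 n then [:: ((z * (if sg then -2 else 2))%coqZ, i.+1, j.+1, (s, sg))]
  else [seq ((z * (-2 * Z.of_nat (absz n)))%coqZ, i.+1, j, (rem_at idx s, sg))
         | idx <- iota 0 (size s) & nth 0%N s idx == absz n].
Definition heisS n (v : seq sterm) := flatten [seq heis_basisS n t | t <- v].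
Definition nopS (ns : seq int) (v : seq sterm) : seq sterm :=
  foldr heisS v ([seq n <- ns | n < 0] ++ [seq n <- ns | 0 <= n]).
Definition apow_basisS (r : nat) (N : int) (t : sterm) : seq sterm :=
  let B := (sumn t.2.1 + absz N)%N in
  flatten [seq nopS ns [:: t] | ns <- tuplesZ r B & sumI ns == N].
Definition apowS r N (v : seq sterm) := flatten [seq apow_basisS r N t | t <- v].
Definition YmodeS (r : nat) (p : int) v := apowS r (p - r%:Z + 1) v.
Definition creatS (ns : seq nat) (v : seq sterm) : seq sterm :=
  foldr (fun n w => heisS (- n%:Z) w) v ns.
Definition ES : seq sterm := [:: ((1%coqZ, 0%N, 0%N), ([::], true)); ((1%coqZ, 0%N, 0%N), ([::], false))].
Definition FS : seq sterm := [:: ((1%coqZ, 0%N, 0%N), ([::], true)); ((-1)%coqZ, 0%N, 0%N, ([::], false))].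

Definition Lam : seq (seq nat) :=
  [:: [:: 6]; [:: 5; 1]; [:: 4; 2]; [:: 4; 1; 1]; [:: 3; 3]; [:: 3; 2; 1]; [:: 3; 1; 1; 1];
      [:: 2; 2; 2]; [:: 2; 2; 1; 1]; [:: 2; 1; 1; 1; 1]; [:: 1; 1; 1; 1; 1; 1]]%N.
Definition idx (s : seq nat) : nat := find (perm_eq s) Lam.
Definition rowpoly (sv : seq sterm) (sg : bool) (j : nat) : seq mono :=
  [seq t.1 | t <- sv & (idx t.2.1 == j) && (t.2.2 == sg)].

Definition SV : seq (seq sterm) :=
  [:: YmodeS 2 0 (creatS [:: 5] FS); YmodeS 2 0 (creatS [:: 4; 1] ES);
      YmodeS 2 0 (creatS [:: 3; 2] ES); YmodeS 2 0 (creatS [:: 3; 1; 1] FS);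
      YmodeS 2 0 (creatS [:: 2; 2; 1] FS); YmodeS 2 0 (creatS [:: 2; 1; 1; 1] ES);
      YmodeS 2 0 (creatS [:: 1; 1; 1; 1; 1] FS);
      YmodeS 2 (-2) (creatS [:: 3] FS); YmodeS 2 (-2) (creatS [:: 2; 1] ES);
      YmodeS 2 (-2) (creatS [:: 1; 1; 1] FS); YmodeS 4 (-3) ES]%N.


Section Mirror.
Variables (k m : nat).
Let a2 : int := - (2 * k%:Z).
Definition evc (K M : algC) (c : mono) : algC := zc c.1.1 * pw K c.1.2 * pw M c.2.
Definition evb (sg : bool) : int := if sg then m%:Z else - m%:Z.
Definition evt (t : sterm) : algC * key := (evc k%:R m%:R t.1, (t.2.1, evb t.2.2)).

Lemma zc_nat n : zc (Z.of_nat n) = n%:R.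
Proof. by rewrite (@zc_rep _ n 0) ?subr0 //; rewrite Z.sub_0_r. Qed.

Lemma zc2 : (2%:R : algC) = zc 2%coqZ.
Proof. exact: (esym (zc_nat 2)). Qed.

Lemma intr_natz n : ((n%:Z)%:~R : algC) = n%:R.
Proof. by []. Qed.

Lemma ev_mul0 z i j sg :
  evc k%:R m%:R ((z * (if sg then -2 else 2))%coqZ, i.+1, j.+1) =
  evc k%:R m%:R (z, i, j) * ((evb sg * a2)%:~R).
Proof.
rewrite /evc /evb /a2 zc_mul /=; case: sg; rewrite ?intrM ?intrN ?intrM !intr_natz;
rewrite zc2.
all: move: (zc z) (pw k%:R i) (pw m%:R j) (k%:R : algC) (m%:R : algC) => Z0 A B K M; aring.
Qed.

Lemma ev_mulp z i j (p : nat) c : c = (-2 * Z.of_nat p)%coqZ ->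
  evc k%:R m%:R ((z * c)%coqZ, i.+1, j) =
  evc k%:R m%:R (z, i, j) * ((p%:Z * a2)%:~R).
Proof.
move=> ->.
rewrite /evc /a2 !zc_mul zc_nat /= !intrM intrN intrM !intr_natz.
rewrite zc2.
move: (zc z) (pw k%:R i) (pw m%:R j) (k%:R : algC) (m%:R : algC) (p%:R : algC) => Z0 A B K M P; aring.
Qed.

Lemma heis_basis_ev n t : heis_basis a2 n (evt t) = map evt (heis_basisS n t).
Proof.
case: t => [[[z i] j] [s sg]]; rewrite /heis_basis /heis_basisS /evt /=.
case: n => [[|p]|p] //=.
  by rewrite -ev_mul0.
rewrite -map_comp; apply: eq_map => x /=; congr pair.
symmetry; apply: ev_mulp; reflexivity.
Qed.

Lemma heis_ev n v : heis a2 n (map evt v) = map evt (heisS n v).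
Proof.
rewrite /heis /heisS map_flatten -map_comp -map_comp; congr flatten.
by apply: eq_map => t; exact: heis_basis_ev.
Qed.

Lemma nop_ev ns v : nop a2 ns (map evt v) = map evt (nopS ns v).
Proof.
rewrite /nop /nopS; elim: (_ ++ _) => [|n l IH] //=.
by rewrite IH heis_ev.
Qed.

Lemma apow_ev r N v : apow a2 r N (map evt v) = map evt (apowS r N v).
Proof.
rewrite /apow /apowS map_flatten -map_comp -map_comp; congr flatten.
apply: eq_map => t /=.
rewrite /apow_basis /apow_basisS map_flatten -map_comp /=.
have -> : [seq ns <- tuplesZ r (sumn t.2.1 + `|N|) | \sum_(x <- ns) x == N] =
          [seq ns <- tuplesZ r (sumn t.2.1 + `|N|) | sumI ns == N].
  by apply: eq_filter => ns; rewrite sumIE.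
congr flatten; apply: eq_map => ns /=.
by rewrite -nop_ev.
Qed.

Lemma Ymode_ev r p v : Ymode a2 r p (map evt v) = map evt (YmodeS r p v).
Proof. exact: apow_ev. Qed.

Lemma creat_ev ns v : creat a2 ns (map evt v) = map evt (creatS ns v).
Proof. by elim: ns => [|n ns IH] //=; rewrite IH heis_ev. Qed.

Lemma evc1 : evc k%:R m%:R (1%coqZ, 0%N, 0%N) = 1.
Proof. by rewrite /evc /= zc1 !mulr1. Qed.
Lemma evcm1 : evc k%:R m%:R ((-1)%coqZ, 0%N, 0%N) = -1 * 1.
Proof. by rewrite /evc /= (zc_opp 1) zc1 !mulr1. Qed.

Lemma Evec_ev : Evec m = map evt ES.
Proof. by rewrite /Evec /ES /= /evt /= evc1. Qed.
Lemma Fvec_ev : Fvec m = map evt FS.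
Proof. by rewrite /Fvec /FS /= /evt /= evc1 evcm1. Qed.



Definition sVir : algC := (2 * a2%:~R)^-1.

Lemma vec_ev0 : nth [::] (lemma4p2_vectors a2 m) 0 = vscale sVir (map evt (nth [::] SV 0)).
Proof.
rewrite (_ : nth _ _ 0 = Vir a2 (-1) (f1 a2 m)); last reflexivity.
rewrite /Vir /f1 Fvec_ev creat_ev Ymode_ev; reflexivity.
Qed.

Lemma vec_ev1 : nth [::] (lemma4p2_vectors a2 m) 1 = vscale sVir (map evt (nth [::] SV 1)).
Proof.
rewrite (_ : nth _ _ 1 = Vir a2 (-1) (f2 a2 m)); last reflexivity.
rewrite /Vir /f2 Evec_ev creat_ev Ymode_ev; reflexivity.
Qed.

Lemma vec_ev2 : nth [::] (lemma4p2_vectors a2 m) 2 = vscale sVir (map evt (nth [::] SV 2)).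
Proof.
rewrite (_ : nth _ _ 2 = Vir a2 (-1) (f3 a2 m)); last reflexivity.
rewrite /Vir /f3 Evec_ev creat_ev Ymode_ev; reflexivity.
Qed.

Lemma vec_ev3 : nth [::] (lemma4p2_vectors a2 m) 3 = vscale sVir (map evt (nth [::] SV 3)).
Proof.
rewrite (_ : nth _ _ 3 = Vir a2 (-1) (f4 a2 m)); last reflexivity.
rewrite /Vir /f4 Fvec_ev creat_ev Ymode_ev; reflexivity.
Qed.

Lemma vec_ev4 : nth [::] (lemma4p2_vectors a2 m) 4 = vscale sVir (map evt (nth [::] SV 4)).
Proof.
rewrite (_ : nth _ _ 4 = Vir a2 (-1) (f5 a2 m)); last reflexivity.
rewrite /Vir /f5 Fvec_ev creat_ev Ymode_ev; reflexivity.
Qed.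

Lemma vec_ev5 : nth [::] (lemma4p2_vectors a2 m) 5 = vscale sVir (map evt (nth [::] SV 5)).
Proof.
rewrite (_ : nth _ _ 5 = Vir a2 (-1) (f6 a2 m)); last reflexivity.
rewrite /Vir /f6 Evec_ev creat_ev Ymode_ev; reflexivity.
Qed.

Lemma vec_ev6 : nth [::] (lemma4p2_vectors a2 m) 6 = vscale sVir (map evt (nth [::] SV 6)).
Proof.
rewrite (_ : nth _ _ 6 = Vir a2 (-1) (f7 a2 m)); last reflexivity.
rewrite /Vir /f7 Fvec_ev creat_ev Ymode_ev; reflexivity.
Qed.

Lemma vec_ev7 : nth [::] (lemma4p2_vectors a2 m) 7 = vscale sVir (map evt (nth [::] SV 7)).
Proof.
rewrite (_ : nth _ _ 7 = Vir a2 (-3) (h1 a2 m)); last reflexivity.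
rewrite /Vir /h1 Fvec_ev creat_ev Ymode_ev; reflexivity.
Qed.

Lemma vec_ev8 : nth [::] (lemma4p2_vectors a2 m) 8 = vscale sVir (map evt (nth [::] SV 8)).
Proof.
rewrite (_ : nth _ _ 8 = Vir a2 (-3) (h2 a2 m)); last reflexivity.
rewrite /Vir /h2 Evec_ev creat_ev Ymode_ev; reflexivity.
Qed.

Lemma vec_ev9 : nth [::] (lemma4p2_vectors a2 m) 9 = vscale sVir (map evt (nth [::] SV 9)).
Proof.
rewrite (_ : nth _ _ 9 = Vir a2 (-3) (h3 a2 m)); last reflexivity.
rewrite /Vir /h3 Fvec_ev creat_ev Ymode_ev; reflexivity.
Qed.

Lemma vec_ev10 : nth [::] (lemma4p2_vectors a2 m) 10 = map evt (nth [::] SV 10).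
Proof.
rewrite (_ : nth _ _ 10 = Ymode a2 4 (-3) (Evec m)); last reflexivity.
rewrite Evec_ev Ymode_ev; reflexivity.
Qed.
End Mirror.

Arguments zc : simpl never.

Definition lam (j : nat) : seq nat := nth [::] Lam j.
Definition sgn (j : nat) : algC := pw (-1) (size (lam j)).
Definition coefR (m : nat) (r rf : 'I_11 -> algC) (x : key) : algC :=
  \sum_(j < 11) (r j * (perm_eq (lam j) x.1 && (m%:Z == x.2))%:R
               + rf j * (perm_eq (lam j) x.1 && (- m%:Z == x.2))%:R).

Lemma coef_vscale c v x : coef (vscale c v) x = c * coef v x.
Proof. by rewrite /coef /vscale big_map mulr_sumr. Qed.

Lemma coef_map_evt k m sv x : coef (map (evt k m) sv) x =
  \sum_(t <- sv | perm_eq t.2.1 x.1 && (evb m t.2.2 == x.2)) evc k%:R m%:R t.1.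
Proof. by rewrite /coef big_map. Qed.

Lemma sum_if (f : mono -> algC) (b : bool) a l :
  \sum_(c <- if b then a :: l else l) f c = b%:R * f a + \sum_(c <- l) f c.
Proof. by case: b; rewrite ?big_cons ?mul1r ?mul0r ?add0r. Qed.

Lemma idx_perm s : (idx s < 11)%N -> perm_eq s (lam (idx s)).
Proof.
move=> H; rewrite /lam /idx; apply: (@nth_find _ [::] (perm_eq s)).
by rewrite has_find.
Qed.

Lemma rowpoly_cons t sv sg j : rowpoly (t :: sv) sg j =
  if (idx t.2.1 == j) && (t.2.2 == sg) then t.1 :: rowpoly sv sg j else rowpoly sv sg j.
Proof. by rewrite /rowpoly /=; case: ifP. Qed.

Lemma sum_rows K M m sv x : all (fun t => idx t.2.1 < 11)%N sv ->
  \sum_(t <- sv | perm_eq t.2.1 x.1 && (evb m t.2.2 == x.2)) evc K M t.1 =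
  \sum_(j < 11) ((\sum_(c <- rowpoly sv true j) evc K M c) * (perm_eq (lam j) x.1 && (m%:Z == x.2))%:R
              + (\sum_(c <- rowpoly sv false j) evc K M c) * (perm_eq (lam j) x.1 && (- m%:Z == x.2))%:R).
Proof.
elim: sv => [|t sv IH] /=.
  by rewrite big_nil big1 // => j _; rewrite /rowpoly /= big_nil !mul0r addr0.
case/andP => Ht Hall; rewrite big_cons IH //.
under [RHS]eq_bigr => j _ do rewrite !rowpoly_cons !sum_if !mulrDl addrACA.
rewrite [RHS]big_split /=.
rewrite (_ : (if _ then _ else _) = (perm_eq t.2.1 x.1 && (evb m t.2.2 == x.2))%:R * evc K M t.1 +
   \sum_(j < 11) ((\sum_(c <- rowpoly sv true j) evc K M c) * (perm_eq (lam j) x.1 && (m%:Z == x.2))%:R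
              + (\sum_(c <- rowpoly sv false j) evc K M c) * (perm_eq (lam j) x.1 && (- m%:Z == x.2))%:R)); last first.
  by case: ifP => _; rewrite ?mul1r ?mul0r ?add0r.
rewrite addrC [RHS]addrC; congr (_ + _).
rewrite (bigD1 (Ordinal Ht)) //= big1; last first.
  move=> jj /negPf Hj; rewrite (_ : (idx t.2.1 == jj) = false) ?mul0r ?add0r //.
  by apply/negbTE; apply: contraFN Hj => /eqP Hj; apply/eqP/val_inj.
rewrite eqxx addr0 /=.
have Hp := @idx_perm _ Ht.
rewrite -(permPl Hp) /evb.
case: (t.2.2); case: (perm_eq t.2.1 x.1); rewrite /= ?mul1r ?mul0r ?add0r ?addr0 ?mulr0 ?mulr1 //.
all: by rewrite mulrC.
Qed.

Lemma vec_row K M m s sv (r : 'I_11 -> algC) :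
  all (fun t => idx t.2.1 < 11)%N sv ->
  (forall j : 'I_11, s * \sum_(c <- rowpoly sv true j) evc K M c = r j) ->
  (forall j : 'I_11, s * \sum_(c <- rowpoly sv false j) evc K M c = sgn j * r j) ->
  forall x, s * \sum_(t <- sv | perm_eq t.2.1 x.1 && (evb m t.2.2 == x.2)) evc K M t.1 =
            coefR m r (fun j => sgn j * r j) x.
Proof.
move=> Hall H1 H2 x; rewrite sum_rows // mulr_sumr; apply: eq_bigr => j _.
by rewrite mulrDr !mulrA H1 H2.
Qed.

Arguments zc : simpl never.
Arguments cadd : simpl never.
Arguments cmul : simpl never.
Arguments copp : simpl never.
Definition Pm (K M : algC) (i j : nat) : algC :=
  match i, j with
  | 0, 0 => (cmul (zc (-20)%coqZ) K)
  | 0, 1 => (cmul (zc (-4)%coqZ) (cmul K M))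
  | 1, 1 => (cmul (zc (-16)%coqZ) K)
  | 1, 2 => (cmul (zc (-4)%coqZ) K)
  | 1, 3 => (cmul (zc (-4)%coqZ) (cmul K M))
  | 2, 2 => (cmul (zc (-12)%coqZ) K)
  | 2, 4 => (cmul (zc (-8)%coqZ) K)
  | 2, 5 => (cmul (zc (-4)%coqZ) (cmul K M))
  | 3, 3 => (cmul (zc (-12)%coqZ) K)
  | 3, 5 => (cmul (zc (-8)%coqZ) K)
  | 3, 6 => (cmul (zc (-4)%coqZ) (cmul K M))
  | 4, 5 => (cmul (zc (-16)%coqZ) K)
  | 4, 7 => (cmul (zc (-4)%coqZ) K)
  | 4, 8 => (cmul (zc (-4)%coqZ) (cmul K M))
  | 5, 6 => (cmul (zc (-8)%coqZ) K)
  | 5, 8 => (cmul (zc (-12)%coqZ) K)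
  | 5, 9 => (cmul (zc (-4)%coqZ) (cmul K M))
  | 6, 9 => (cmul (zc (-20)%coqZ) K)
  | 6, 10 => (cmul (zc (-4)%coqZ) (cmul K M))
  | 7, 0 => (cmul (zc (-12)%coqZ) K)
  | 7, 4 => (cmul (zc (-4)%coqZ) (cmul K M))
  | 7, 5 => ((zc (2)%coqZ))
  | 8, 1 => (cmul (zc (-8)%coqZ) K)
  | 8, 2 => (cmul (zc (-4)%coqZ) K)
  | 8, 5 => (cmul (zc (-4)%coqZ) (cmul K M))
  | 8, 8 => ((zc (2)%coqZ))
  | 9, 3 => (cmul (zc (-12)%coqZ) K)
  | 9, 6 => (cmul (zc (-4)%coqZ) (cmul K M))
  | 9, 9 => ((zc (2)%coqZ))
  | 10, 0 => (cmul (zc (-32)%coqZ) (cmul K (cmul K (cmul K (cmul M (cmul M M))))))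
  | 10, 1 => (cmul (zc (48)%coqZ) (cmul K (cmul K (cmul M M))))
  | 10, 2 => (cmul (zc (48)%coqZ) (cmul K (cmul K (cmul M M))))
  | 10, 3 => (cmul (zc (-24)%coqZ) (cmul K M))
  | 10, 4 => (cmul (zc (24)%coqZ) (cmul K (cmul K (cmul M M))))
  | 10, 5 => (cmul (zc (-48)%coqZ) (cmul K M))
  | 10, 6 => ((zc (4)%coqZ))
  | 10, 7 => (cmul (zc (-8)%coqZ) (cmul K M))
  | 10, 8 => ((zc (6)%coqZ))
  | _, _ => czero
  end.

Ltac do_row :=
  match goal with |- context [rowpoly ?a ?b ?c] =>
    let l := eval vm_compute in (rowpoly a b c) in
    rewrite (_ : rowpoly a b c = l); [| vm_compute; reflexivity] end;
  rewrite ?big_cons ?big_nil /evc /Pm /sgn /lam /=; aring.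

Lemma rows0 (K M : algC) (j : 'I_11) :
  \sum_(c <- rowpoly (nth [::] SV 0) true j) evc K M c = Pm K M 0 j /\
  \sum_(c <- rowpoly (nth [::] SV 0) false j) evc K M c = sgn j * Pm K M 0 j.
Proof.
case: j => -[|[|[|[|[|[|[|[|[|[|[|?]]]]]]]]]]] // Hj; split; do_row.
Qed.

Lemma rows1 (K M : algC) (j : 'I_11) :
  \sum_(c <- rowpoly (nth [::] SV 1) true j) evc K M c = Pm K M 1 j /\
  \sum_(c <- rowpoly (nth [::] SV 1) false j) evc K M c = sgn j * Pm K M 1 j.
Proof.
case: j => -[|[|[|[|[|[|[|[|[|[|[|?]]]]]]]]]]] // Hj; split; do_row.
Qed.

Lemma rows2 (K M : algC) (j : 'I_11) :
  \sum_(c <- rowpoly (nth [::] SV 2) true j) evc K M c = Pm K M 2 j /\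
  \sum_(c <- rowpoly (nth [::] SV 2) false j) evc K M c = sgn j * Pm K M 2 j.
Proof.
case: j => -[|[|[|[|[|[|[|[|[|[|[|?]]]]]]]]]]] // Hj; split; do_row.
Qed.

Lemma rows3 (K M : algC) (j : 'I_11) :
  \sum_(c <- rowpoly (nth [::] SV 3) true j) evc K M c = Pm K M 3 j /\
  \sum_(c <- rowpoly (nth [::] SV 3) false j) evc K M c = sgn j * Pm K M 3 j.
Proof.
case: j => -[|[|[|[|[|[|[|[|[|[|[|?]]]]]]]]]]] // Hj; split; do_row.
Qed.

Lemma rows4 (K M : algC) (j : 'I_11) :
  \sum_(c <- rowpoly (nth [::] SV 4) true j) evc K M c = Pm K M 4 j /\
  \sum_(c <- rowpoly (nth [::] SV 4) false j) evc K M c = sgn j * Pm K M 4 j.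
Proof.
case: j => -[|[|[|[|[|[|[|[|[|[|[|?]]]]]]]]]]] // Hj; split; do_row.
Qed.

Lemma rows5 (K M : algC) (j : 'I_11) :
  \sum_(c <- rowpoly (nth [::] SV 5) true j) evc K M c = Pm K M 5 j /\
  \sum_(c <- rowpoly (nth [::] SV 5) false j) evc K M c = sgn j * Pm K M 5 j.
Proof.
case: j => -[|[|[|[|[|[|[|[|[|[|[|?]]]]]]]]]]] // Hj; split; do_row.
Qed.

Lemma rows6 (K M : algC) (j : 'I_11) :
  \sum_(c <- rowpoly (nth [::] SV 6) true j) evc K M c = Pm K M 6 j /\
  \sum_(c <- rowpoly (nth [::] SV 6) false j) evc K M c = sgn j * Pm K M 6 j.
Proof.
case: j => -[|[|[|[|[|[|[|[|[|[|[|?]]]]]]]]]]] // Hj; split; do_row.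
Qed.

Lemma rows7 (K M : algC) (j : 'I_11) :
  \sum_(c <- rowpoly (nth [::] SV 7) true j) evc K M c = Pm K M 7 j /\
  \sum_(c <- rowpoly (nth [::] SV 7) false j) evc K M c = sgn j * Pm K M 7 j.
Proof.
case: j => -[|[|[|[|[|[|[|[|[|[|[|?]]]]]]]]]]] // Hj; split; do_row.
Qed.

Lemma rows8 (K M : algC) (j : 'I_11) :
  \sum_(c <- rowpoly (nth [::] SV 8) true j) evc K M c = Pm K M 8 j /\
  \sum_(c <- rowpoly (nth [::] SV 8) false j) evc K M c = sgn j * Pm K M 8 j.
Proof.
case: j => -[|[|[|[|[|[|[|[|[|[|[|?]]]]]]]]]]] // Hj; split; do_row.
Qed.

Lemma rows9 (K M : algC) (j : 'I_11) :
  \sum_(c <- rowpoly (nth [::] SV 9) true j) evc K M c = Pm K M 9 j /\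
  \sum_(c <- rowpoly (nth [::] SV 9) false j) evc K M c = sgn j * Pm K M 9 j.
Proof.
case: j => -[|[|[|[|[|[|[|[|[|[|[|?]]]]]]]]]]] // Hj; split; do_row.
Qed.

Lemma rows10 (K M : algC) (j : 'I_11) :
  \sum_(c <- rowpoly (nth [::] SV 10) true j) evc K M c = Pm K M 10 j /\
  \sum_(c <- rowpoly (nth [::] SV 10) false j) evc K M c = sgn j * Pm K M 10 j.
Proof.
case: j => -[|[|[|[|[|[|[|[|[|[|[|?]]]]]]]]]]] // Hj; split; do_row.
Qed.


Arguments zc : simpl never.
Arguments cadd : simpl never.
Arguments cmul : simpl never.
Arguments copp : simpl never.
Definition Adj (K M : algC) (j i : nat) : algC :=
  match j, i with
  | 0, 0 => (cadd (cmul (zc (168)%coqZ) (cmul K (cmul K (cmul K (cmul K (cmul K (cmul K (cmul K (cmul K (cmul M (cmul M M))))))))))) (cadd (cmul (zc (156)%coqZ) (cmul K (cmul K (cmul K (cmul K (cmul K (cmul K (cmul K (cmul K (cmul K (cmul M (cmul M (cmul M (cmul M M)))))))))))))) (cmul (zc (-48)%coqZ) (cmul K (cmul K (cmul K (cmul K (cmul K (cmul K (cmul K (cmul K (cmul K (cmul K (cmul M (cmul M (cmul M (cmul M (cmul M (cmul M M)))))))))))))))))))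
  | 0, 1 => (cadd (cmul (zc (-30)%coqZ) (cmul K (cmul K (cmul K (cmul K (cmul K (cmul K (cmul K (cmul K (cmul M (cmul M (cmul M M)))))))))))) (cmul (zc (24)%coqZ) (cmul K (cmul K (cmul K (cmul K (cmul K (cmul K (cmul K (cmul K (cmul K (cmul M (cmul M (cmul M (cmul M (cmul M M))))))))))))))))
  | 0, 2 => (cadd (cmul (zc (30)%coqZ) (cmul K (cmul K (cmul K (cmul K (cmul K (cmul K (cmul K (cmul K (cmul M (cmul M (cmul M M)))))))))))) (cadd (cmul (zc (82)%coqZ) (cmul K (cmul K (cmul K (cmul K (cmul K (cmul K (cmul K (cmul K (cmul K (cmul M (cmul M (cmul M (cmul M (cmul M M))))))))))))))) (cmul (zc (-8)%coqZ) (cmul K (cmul K (cmul K (cmul K (cmul K (cmul K (cmul K (cmul K (cmul K (cmul K (cmul M (cmul M (cmul M (cmul M (cmul M (cmul M (cmul M M))))))))))))))))))))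
  | 0, 3 => (cadd (cmul (zc (-18)%coqZ) (cmul K (cmul K (cmul K (cmul K (cmul K (cmul K (cmul K (cmul M (cmul M M)))))))))) (cadd (cmul (zc (-74)%coqZ) (cmul K (cmul K (cmul K (cmul K (cmul K (cmul K (cmul K (cmul K (cmul M (cmul M (cmul M (cmul M M))))))))))))) (cadd (cmul (zc (-46)%coqZ) (cmul K (cmul K (cmul K (cmul K (cmul K (cmul K (cmul K (cmul K (cmul K (cmul M (cmul M (cmul M (cmul M (cmul M (cmul M M)))))))))))))))) (cmul (zc (-8)%coqZ) (cmul K (cmul K (cmul K (cmul K (cmul K (cmul K (cmul K (cmul K (cmul K (cmul K (cmul M (cmul M (cmul M (cmul M (cmul M (cmul M (cmul M (cmul M M))))))))))))))))))))))
  | 0, 4 => (cadd (cmul (zc (-12)%coqZ) (cmul K (cmul K (cmul K (cmul K (cmul K (cmul K (cmul K (cmul M (cmul M M)))))))))) (cmul (zc (-48)%coqZ) (cmul K (cmul K (cmul K (cmul K (cmul K (cmul K (cmul K (cmul K (cmul M (cmul M (cmul M (cmul M M))))))))))))))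
  | 0, 5 => (cadd (cmul (zc (3)%coqZ) (cmul K (cmul K (cmul K (cmul K (cmul K (cmul K (cmul M M)))))))) (cadd (cmul (zc (18)%coqZ) (cmul K (cmul K (cmul K (cmul K (cmul K (cmul K (cmul K (cmul M (cmul M (cmul M M))))))))))) (cadd (cmul (zc (19)%coqZ) (cmul K (cmul K (cmul K (cmul K (cmul K (cmul K (cmul K (cmul K (cmul M (cmul M (cmul M (cmul M (cmul M M)))))))))))))) (cmul (zc (4)%coqZ) (cmul K (cmul K (cmul K (cmul K (cmul K (cmul K (cmul K (cmul K (cmul K (cmul M (cmul M (cmul M (cmul M (cmul M (cmul M (cmul M M))))))))))))))))))))
  | 0, 7 => (cadd (cmul (zc (-24)%coqZ) (cmul K (cmul K (cmul K (cmul K (cmul K (cmul K (cmul K (cmul K (cmul M (cmul M M))))))))))) (cadd (cmul (zc (-20)%coqZ) (cmul K (cmul K (cmul K (cmul K (cmul K (cmul K (cmul K (cmul K (cmul K (cmul M (cmul M (cmul M (cmul M M)))))))))))))) (cmul (zc (16)%coqZ) (cmul K (cmul K (cmul K (cmul K (cmul K (cmul K (cmul K (cmul K (cmul K (cmul K (cmul M (cmul M (cmul M (cmul M (cmul M (cmul M M)))))))))))))))))))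
  | 0, 8 => (cadd (cmul (zc (12)%coqZ) (cmul K (cmul K (cmul K (cmul K (cmul K (cmul K (cmul K (cmul K (cmul M (cmul M (cmul M M)))))))))))) (cadd (cmul (zc (18)%coqZ) (cmul K (cmul K (cmul K (cmul K (cmul K (cmul K (cmul K (cmul K (cmul K (cmul M (cmul M (cmul M (cmul M (cmul M M))))))))))))))) (cmul (zc (24)%coqZ) (cmul K (cmul K (cmul K (cmul K (cmul K (cmul K (cmul K (cmul K (cmul K (cmul K (cmul M (cmul M (cmul M (cmul M (cmul M (cmul M (cmul M M))))))))))))))))))))
  | 0, 9 => (cadd (cmul (zc (6)%coqZ) (cmul K (cmul K (cmul K (cmul K (cmul K (cmul K (cmul K (cmul M (cmul M M)))))))))) (cadd (cmul (zc (36)%coqZ) (cmul K (cmul K (cmul K (cmul K (cmul K (cmul K (cmul K (cmul K (cmul M (cmul M (cmul M (cmul M M))))))))))))) (cadd (cmul (zc (38)%coqZ) (cmul K (cmul K (cmul K (cmul K (cmul K (cmul K (cmul K (cmul K (cmul K (cmul M (cmul M (cmul M (cmul M (cmul M (cmul M M)))))))))))))))) (cmul (zc (8)%coqZ) (cmul K (cmul K (cmul K (cmul K (cmul K (cmul K (cmul K (cmul K (cmul K (cmul K (cmul M (cmul M (cmul M (cmul M (cmul M (cmul M (cmul M (cmul M M))))))))))))))))))))))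
  | 0, 10 => (cadd (cmul (zc (6)%coqZ) (cmul K (cmul K (cmul K (cmul K (cmul K (cmul K (cmul K (cmul M M))))))))) (cmul (zc (24)%coqZ) (cmul K (cmul K (cmul K (cmul K (cmul K (cmul K (cmul K (cmul K (cmul M (cmul M (cmul M M)))))))))))))
  | 1, 0 => (cadd (cmul (zc (-72)%coqZ) (cmul K (cmul K (cmul K (cmul K (cmul K (cmul K (cmul K (cmul K (cmul M M)))))))))) (cadd (cmul (zc (-12)%coqZ) (cmul K (cmul K (cmul K (cmul K (cmul K (cmul K (cmul K (cmul K (cmul K (cmul M (cmul M (cmul M M))))))))))))) (cmul (zc (240)%coqZ) (cmul K (cmul K (cmul K (cmul K (cmul K (cmul K (cmul K (cmul K (cmul K (cmul K (cmul M (cmul M (cmul M (cmul M (cmul M M))))))))))))))))))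
  | 1, 1 => (cadd (cmul (zc (150)%coqZ) (cmul K (cmul K (cmul K (cmul K (cmul K (cmul K (cmul K (cmul K (cmul M (cmul M M))))))))))) (cmul (zc (-120)%coqZ) (cmul K (cmul K (cmul K (cmul K (cmul K (cmul K (cmul K (cmul K (cmul K (cmul M (cmul M (cmul M (cmul M M)))))))))))))))
  | 1, 2 => (cadd (cmul (zc (-150)%coqZ) (cmul K (cmul K (cmul K (cmul K (cmul K (cmul K (cmul K (cmul K (cmul M (cmul M M))))))))))) (cadd (cmul (zc (-410)%coqZ) (cmul K (cmul K (cmul K (cmul K (cmul K (cmul K (cmul K (cmul K (cmul K (cmul M (cmul M (cmul M (cmul M M)))))))))))))) (cmul (zc (40)%coqZ) (cmul K (cmul K (cmul K (cmul K (cmul K (cmul K (cmul K (cmul K (cmul K (cmul K (cmul M (cmul M (cmul M (cmul M (cmul M (cmul M M)))))))))))))))))))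
  | 1, 3 => (cadd (cmul (zc (90)%coqZ) (cmul K (cmul K (cmul K (cmul K (cmul K (cmul K (cmul K (cmul M M))))))))) (cadd (cmul (zc (370)%coqZ) (cmul K (cmul K (cmul K (cmul K (cmul K (cmul K (cmul K (cmul K (cmul M (cmul M (cmul M M)))))))))))) (cadd (cmul (zc (230)%coqZ) (cmul K (cmul K (cmul K (cmul K (cmul K (cmul K (cmul K (cmul K (cmul K (cmul M (cmul M (cmul M (cmul M (cmul M M))))))))))))))) (cmul (zc (40)%coqZ) (cmul K (cmul K (cmul K (cmul K (cmul K (cmul K (cmul K (cmul K (cmul K (cmul K (cmul M (cmul M (cmul M (cmul M (cmul M (cmul M (cmul M M)))))))))))))))))))))
  | 1, 4 => (cadd (cmul (zc (60)%coqZ) (cmul K (cmul K (cmul K (cmul K (cmul K (cmul K (cmul K (cmul M M))))))))) (cmul (zc (240)%coqZ) (cmul K (cmul K (cmul K (cmul K (cmul K (cmul K (cmul K (cmul K (cmul M (cmul M (cmul M M)))))))))))))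
  | 1, 5 => (cadd (cmul (zc (-15)%coqZ) (cmul K (cmul K (cmul K (cmul K (cmul K (cmul K M))))))) (cadd (cmul (zc (-90)%coqZ) (cmul K (cmul K (cmul K (cmul K (cmul K (cmul K (cmul K (cmul M (cmul M M)))))))))) (cadd (cmul (zc (-95)%coqZ) (cmul K (cmul K (cmul K (cmul K (cmul K (cmul K (cmul K (cmul K (cmul M (cmul M (cmul M (cmul M M))))))))))))) (cmul (zc (-20)%coqZ) (cmul K (cmul K (cmul K (cmul K (cmul K (cmul K (cmul K (cmul K (cmul K (cmul M (cmul M (cmul M (cmul M (cmul M (cmul M M)))))))))))))))))))
  | 1, 7 => (cadd (cmul (zc (120)%coqZ) (cmul K (cmul K (cmul K (cmul K (cmul K (cmul K (cmul K (cmul K (cmul M M)))))))))) (cadd (cmul (zc (100)%coqZ) (cmul K (cmul K (cmul K (cmul K (cmul K (cmul K (cmul K (cmul K (cmul K (cmul M (cmul M (cmul M M))))))))))))) (cmul (zc (-80)%coqZ) (cmul K (cmul K (cmul K (cmul K (cmul K (cmul K (cmul K (cmul K (cmul K (cmul K (cmul M (cmul M (cmul M (cmul M (cmul M M))))))))))))))))))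
  | 1, 8 => (cadd (cmul (zc (-60)%coqZ) (cmul K (cmul K (cmul K (cmul K (cmul K (cmul K (cmul K (cmul K (cmul M (cmul M M))))))))))) (cadd (cmul (zc (-90)%coqZ) (cmul K (cmul K (cmul K (cmul K (cmul K (cmul K (cmul K (cmul K (cmul K (cmul M (cmul M (cmul M (cmul M M)))))))))))))) (cmul (zc (-120)%coqZ) (cmul K (cmul K (cmul K (cmul K (cmul K (cmul K (cmul K (cmul K (cmul K (cmul K (cmul M (cmul M (cmul M (cmul M (cmul M (cmul M M)))))))))))))))))))
  | 1, 9 => (cadd (cmul (zc (-30)%coqZ) (cmul K (cmul K (cmul K (cmul K (cmul K (cmul K (cmul K (cmul M M))))))))) (cadd (cmul (zc (-180)%coqZ) (cmul K (cmul K (cmul K (cmul K (cmul K (cmul K (cmul K (cmul K (cmul M (cmul M (cmul M M)))))))))))) (cadd (cmul (zc (-190)%coqZ) (cmul K (cmul K (cmul K (cmul K (cmul K (cmul K (cmul K (cmul K (cmul K (cmul M (cmul M (cmul M (cmul M (cmul M M))))))))))))))) (cmul (zc (-40)%coqZ) (cmul K (cmul K (cmul K (cmul K (cmul K (cmul K (cmul K (cmul K (cmul K (cmul K (cmul M (cmul M (cmul M (cmul M (cmul M (cmul M (cmul M M)))))))))))))))))))))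
  | 1, 10 => (cadd (cmul (zc (-30)%coqZ) (cmul K (cmul K (cmul K (cmul K (cmul K (cmul K (cmul K M)))))))) (cmul (zc (-120)%coqZ) (cmul K (cmul K (cmul K (cmul K (cmul K (cmul K (cmul K (cmul K (cmul M (cmul M M))))))))))))
  | 2, 0 => (cadd (cmul (zc (288)%coqZ) (cmul K (cmul K (cmul K (cmul K (cmul K (cmul K (cmul K (cmul K (cmul M M)))))))))) (cadd (cmul (zc (-456)%coqZ) (cmul K (cmul K (cmul K (cmul K (cmul K (cmul K (cmul K (cmul K (cmul K (cmul K (cmul M (cmul M (cmul M (cmul M (cmul M M)))))))))))))))) (cmul (zc (-96)%coqZ) (cmul K (cmul K (cmul K (cmul K (cmul K (cmul K (cmul K (cmul K (cmul K (cmul K (cmul K (cmul M (cmul M (cmul M (cmul M (cmul M (cmul M (cmul M M)))))))))))))))))))))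
  | 2, 1 => (cadd (cmul (zc (168)%coqZ) (cmul K (cmul K (cmul K (cmul K (cmul K (cmul K (cmul K (cmul K (cmul M (cmul M M))))))))))) (cadd (cmul (zc (324)%coqZ) (cmul K (cmul K (cmul K (cmul K (cmul K (cmul K (cmul K (cmul K (cmul K (cmul M (cmul M (cmul M (cmul M M)))))))))))))) (cmul (zc (48)%coqZ) (cmul K (cmul K (cmul K (cmul K (cmul K (cmul K (cmul K (cmul K (cmul K (cmul K (cmul M (cmul M (cmul M (cmul M (cmul M (cmul M M)))))))))))))))))))
  | 2, 2 => (cadd (cmul (zc (600)%coqZ) (cmul K (cmul K (cmul K (cmul K (cmul K (cmul K (cmul K (cmul K (cmul M (cmul M M))))))))))) (cadd (cmul (zc (772)%coqZ) (cmul K (cmul K (cmul K (cmul K (cmul K (cmul K (cmul K (cmul K (cmul K (cmul M (cmul M (cmul M (cmul M M)))))))))))))) (cadd (cmul (zc (36)%coqZ) (cmul K (cmul K (cmul K (cmul K (cmul K (cmul K (cmul K (cmul K (cmul K (cmul K (cmul M (cmul M (cmul M (cmul M (cmul M (cmul M M))))))))))))))))) (cmul (zc (-16)%coqZ) (cmul K (cmul K (cmul K (cmul K (cmul K (cmul K (cmul K (cmul K (cmul K (cmul K (cmul K (cmul M (cmul M (cmul M (cmul M (cmul M (cmul M (cmul M (cmul M M)))))))))))))))))))))))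
  | 2, 3 => (cadd (cmul (zc (-360)%coqZ) (cmul K (cmul K (cmul K (cmul K (cmul K (cmul K (cmul K (cmul M M))))))))) (cadd (cmul (zc (-908)%coqZ) (cmul K (cmul K (cmul K (cmul K (cmul K (cmul K (cmul K (cmul K (cmul M (cmul M (cmul M M)))))))))))) (cadd (cmul (zc (-716)%coqZ) (cmul K (cmul K (cmul K (cmul K (cmul K (cmul K (cmul K (cmul K (cmul K (cmul M (cmul M (cmul M (cmul M (cmul M M))))))))))))))) (cadd (cmul (zc (-220)%coqZ) (cmul K (cmul K (cmul K (cmul K (cmul K (cmul K (cmul K (cmul K (cmul K (cmul K (cmul M (cmul M (cmul M (cmul M (cmul M (cmul M (cmul M M)))))))))))))))))) (cmul (zc (-16)%coqZ) (cmul K (cmul K (cmul K (cmul K (cmul K (cmul K (cmul K (cmul K (cmul K (cmul K (cmul K (cmul M (cmul M (cmul M (cmul M (cmul M (cmul M (cmul M (cmul M (cmul M M)))))))))))))))))))))))))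
  | 2, 4 => (cadd (cmul (zc (-240)%coqZ) (cmul K (cmul K (cmul K (cmul K (cmul K (cmul K (cmul K (cmul M M))))))))) (cadd (cmul (zc (-408)%coqZ) (cmul K (cmul K (cmul K (cmul K (cmul K (cmul K (cmul K (cmul K (cmul M (cmul M (cmul M M)))))))))))) (cmul (zc (-96)%coqZ) (cmul K (cmul K (cmul K (cmul K (cmul K (cmul K (cmul K (cmul K (cmul K (cmul M (cmul M (cmul M (cmul M (cmul M M)))))))))))))))))
  | 2, 5 => (cadd (cmul (zc (60)%coqZ) (cmul K (cmul K (cmul K (cmul K (cmul K (cmul K M))))))) (cadd (cmul (zc (222)%coqZ) (cmul K (cmul K (cmul K (cmul K (cmul K (cmul K (cmul K (cmul M (cmul M M)))))))))) (cadd (cmul (zc (256)%coqZ) (cmul K (cmul K (cmul K (cmul K (cmul K (cmul K (cmul K (cmul K (cmul M (cmul M (cmul M (cmul M M))))))))))))) (cadd (cmul (zc (102)%coqZ) (cmul K (cmul K (cmul K (cmul K (cmul K (cmul K (cmul K (cmul K (cmul K (cmul M (cmul M (cmul M (cmul M (cmul M (cmul M M)))))))))))))))) (cmul (zc (8)%coqZ) (cmul K (cmul K (cmul K (cmul K (cmul K (cmul K (cmul K (cmul K (cmul K (cmul K (cmul M (cmul M (cmul M (cmul M (cmul M (cmul M (cmul M (cmul M M)))))))))))))))))))))))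
  | 2, 7 => (cadd (cmul (zc (-480)%coqZ) (cmul K (cmul K (cmul K (cmul K (cmul K (cmul K (cmul K (cmul K (cmul M M)))))))))) (cadd (cmul (zc (-320)%coqZ) (cmul K (cmul K (cmul K (cmul K (cmul K (cmul K (cmul K (cmul K (cmul K (cmul M (cmul M (cmul M M))))))))))))) (cadd (cmul (zc (216)%coqZ) (cmul K (cmul K (cmul K (cmul K (cmul K (cmul K (cmul K (cmul K (cmul K (cmul K (cmul M (cmul M (cmul M (cmul M (cmul M M)))))))))))))))) (cmul (zc (32)%coqZ) (cmul K (cmul K (cmul K (cmul K (cmul K (cmul K (cmul K (cmul K (cmul K (cmul K (cmul K (cmul M (cmul M (cmul M (cmul M (cmul M (cmul M (cmul M M))))))))))))))))))))))
  | 2, 8 => (cadd (cmul (zc (240)%coqZ) (cmul K (cmul K (cmul K (cmul K (cmul K (cmul K (cmul K (cmul K (cmul M (cmul M M))))))))))) (cadd (cmul (zc (576)%coqZ) (cmul K (cmul K (cmul K (cmul K (cmul K (cmul K (cmul K (cmul K (cmul K (cmul M (cmul M (cmul M (cmul M M)))))))))))))) (cadd (cmul (zc (420)%coqZ) (cmul K (cmul K (cmul K (cmul K (cmul K (cmul K (cmul K (cmul K (cmul K (cmul K (cmul M (cmul M (cmul M (cmul M (cmul M (cmul M M))))))))))))))))) (cmul (zc (48)%coqZ) (cmul K (cmul K (cmul K (cmul K (cmul K (cmul K (cmul K (cmul K (cmul K (cmul K (cmul K (cmul M (cmul M (cmul M (cmul M (cmul M (cmul M (cmul M (cmul M M)))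))))))))))))))))))))
  | 2, 9 => (cadd (cmul (zc (120)%coqZ) (cmul K (cmul K (cmul K (cmul K (cmul K (cmul K (cmul K (cmul M M))))))))) (cadd (cmul (zc (444)%coqZ) (cmul K (cmul K (cmul K (cmul K (cmul K (cmul K (cmul K (cmul K (cmul M (cmul M (cmul M M)))))))))))) (cadd (cmul (zc (512)%coqZ) (cmul K (cmul K (cmul K (cmul K (cmul K (cmul K (cmul K (cmul K (cmul K (cmul M (cmul M (cmul M (cmul M (cmul M M))))))))))))))) (cadd (cmul (zc (204)%coqZ) (cmul K (cmul K (cmul K (cmul K (cmul K (cmul K (cmul K (cmul K (cmul K (cmul K (cmul M (cmul M (cmul M (cmul M (cmul M (cmul M (cmul M M)))))))))))))))))) (cmul (zc (16)%coqZ) (cmul K (cmul K (cmul K (cmul K (cmul K (cmul K (cmul K (cmul K (cmul K (cmul K (cmul K (cmul M (cmul M (cmul M (cmul M (cmul M (cmul M (cmul M (cmul M (cmul M M)))))))))))))))))))))))))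
  | 2, 10 => (cadd (cmul (zc (120)%coqZ) (cmul K (cmul K (cmul K (cmul K (cmul K (cmul K (cmul K M)))))))) (cadd (cmul (zc (204)%coqZ) (cmul K (cmul K (cmul K (cmul K (cmul K (cmul K (cmul K (cmul K (cmul M (cmul M M))))))))))) (cmul (zc (48)%coqZ) (cmul K (cmul K (cmul K (cmul K (cmul K (cmul K (cmul K (cmul K (cmul K (cmul M (cmul M (cmul M (cmul M M))))))))))))))))
  | 3, 0 => (cadd (cmul (zc (48)%coqZ) (cmul K (cmul K (cmul K (cmul K (cmul K (cmul K (cmul K (cmul K (cmul K (cmul M (cmul M M)))))))))))) (cadd (cmul (zc (-504)%coqZ) (cmul K (cmul K (cmul K (cmul K (cmul K (cmul K (cmul K (cmul K (cmul K (cmul K (cmul M (cmul M (cmul M (cmul M M))))))))))))))) (cmul (zc (96)%coqZ) (cmul K (cmul K (cmul K (cmul K (cmul K (cmul K (cmul K (cmul K (cmul K (cmul K (cmul K (cmul M (cmul M (cmul M (cmul M (cmul M (cmul M M))))))))))))))))))))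
  | 3, 1 => (cadd (cmul (zc (924)%coqZ) (cmul K (cmul K (cmul K (cmul K (cmul K (cmul K (cmul K (cmul K (cmul K (cmul M (cmul M (cmul M M))))))))))))) (cmul (zc (-48)%coqZ) (cmul K (cmul K (cmul K (cmul K (cmul K (cmul K (cmul K (cmul K (cmul K (cmul K (cmul M (cmul M (cmul M (cmul M (cmul M M)))))))))))))))))
  | 3, 2 => (cadd (cmul (zc (868)%coqZ) (cmul K (cmul K (cmul K (cmul K (cmul K (cmul K (cmul K (cmul K (cmul K (cmul M (cmul M (cmul M M))))))))))))) (cadd (cmul (zc (-196)%coqZ) (cmul K (cmul K (cmul K (cmul K (cmul K (cmul K (cmul K (cmul K (cmul K (cmul K (cmul M (cmul M (cmul M (cmul M (cmul M M)))))))))))))))) (cmul (zc (16)%coqZ) (cmul K (cmul K (cmul K (cmul K (cmul K (cmul K (cmul K (cmul K (cmul K (cmul K (cmul K (cmul M (cmul M (cmul M (cmul M (cmul M (cmul M (cmul M M)))))))))))))))))))))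
  | 3, 3 => (cadd (cmul (zc (-572)%coqZ) (cmul K (cmul K (cmul K (cmul K (cmul K (cmul K (cmul K (cmul K (cmul M (cmul M M))))))))))) (cadd (cmul (zc (-204)%coqZ) (cmul K (cmul K (cmul K (cmul K (cmul K (cmul K (cmul K (cmul K (cmul K (cmul M (cmul M (cmul M (cmul M M)))))))))))))) (cadd (cmul (zc (60)%coqZ) (cmul K (cmul K (cmul K (cmul K (cmul K (cmul K (cmul K (cmul K (cmul K (cmul K (cmul M (cmul M (cmul M (cmul M (cmul M (cmul M M))))))))))))))))) (cmul (zc (16)%coqZ) (cmul K (cmul K (cmul K (cmul K (cmul K (cmul K (cmul K (cmul K (cmul K (cmul K (cmul K (cmul M (cmul M (cmul M (cmul M (cmul M (cmul M (cmul M (cmul M M)))))))))))))))))))))))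
  | 3, 4 => (cadd (cmul (zc (-552)%coqZ) (cmul K (cmul K (cmul K (cmul K (cmul K (cmul K (cmul K (cmul K (cmul M (cmul M M))))))))))) (cmul (zc (96)%coqZ) (cmul K (cmul K (cmul K (cmul K (cmul K (cmul K (cmul K (cmul K (cmul K (cmul M (cmul M (cmul M (cmul M M)))))))))))))))
  | 3, 5 => (cadd (cmul (zc (138)%coqZ) (cmul K (cmul K (cmul K (cmul K (cmul K (cmul K (cmul K (cmul M M))))))))) (cadd (cmul (zc (124)%coqZ) (cmul K (cmul K (cmul K (cmul K (cmul K (cmul K (cmul K (cmul K (cmul M (cmul M (cmul M M)))))))))))) (cadd (cmul (zc (-22)%coqZ) (cmul K (cmul K (cmul K (cmul K (cmul K (cmul K (cmul K (cmul K (cmul K (cmul M (cmul M (cmul M (cmul M (cmul M M))))))))))))))) (cmul (zc (-8)%coqZ) (cmul K (cmul K (cmul K (cmul K (cmul K (cmul K (cmul K (cmul K (cmul K (cmul K (cmul M (cmul M (cmul M (cmul M (cmul M (cmul M (cmul M M)))))))))))))))))))))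
  | 3, 7 => (cadd (cmul (zc (-80)%coqZ) (cmul K (cmul K (cmul K (cmul K (cmul K (cmul K (cmul K (cmul K (cmul K (cmul M (cmul M M)))))))))))) (cadd (cmul (zc (104)%coqZ) (cmul K (cmul K (cmul K (cmul K (cmul K (cmul K (cmul K (cmul K (cmul K (cmul K (cmul M (cmul M (cmul M (cmul M M))))))))))))))) (cmul (zc (-32)%coqZ) (cmul K (cmul K (cmul K (cmul K (cmul K (cmul K (cmul K (cmul K (cmul K (cmul K (cmul K (cmul M (cmul M (cmul M (cmul M (cmul M (cmul M M))))))))))))))))))))
  | 3, 8 => (cadd (cmul (zc (-216)%coqZ) (cmul K (cmul K (cmul K (cmul K (cmul K (cmul K (cmul K (cmul K (cmul K (cmul M (cmul M (cmul M M))))))))))))) (cadd (cmul (zc (60)%coqZ) (cmul K (cmul K (cmul K (cmul K (cmul K (cmul K (cmul K (cmul K (cmul K (cmul K (cmul M (cmul M (cmul M (cmul M (cmul M M)))))))))))))))) (cmul (zc (-48)%coqZ) (cmul K (cmul K (cmul K (cmul K (cmul K (cmul K (cmul K (cmul K (cmul K (cmul K (cmul K (cmul M (cmul M (cmul M (cmul M (cmul M (cmul M (cmul M M)))))))))))))))))))))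
  | 3, 9 => (cadd (cmul (zc (276)%coqZ) (cmul K (cmul K (cmul K (cmul K (cmul K (cmul K (cmul K (cmul K (cmul M (cmul M M))))))))))) (cadd (cmul (zc (248)%coqZ) (cmul K (cmul K (cmul K (cmul K (cmul K (cmul K (cmul K (cmul K (cmul K (cmul M (cmul M (cmul M (cmul M M)))))))))))))) (cadd (cmul (zc (-44)%coqZ) (cmul K (cmul K (cmul K (cmul K (cmul K (cmul K (cmul K (cmul K (cmul K (cmul K (cmul M (cmul M (cmul M (cmul M (cmul M (cmul M M))))))))))))))))) (cmul (zc (-16)%coqZ) (cmul K (cmul K (cmul K (cmul K (cmul K (cmul K (cmul K (cmul K (cmul K (cmul K (cmul K (cmul M (cmul M (cmul M (cmul M (cmul M (cmul M (cmul M (cmul M M)))))))))))))))))))))))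
  | 3, 10 => (cadd (cmul (zc (276)%coqZ) (cmul K (cmul K (cmul K (cmul K (cmul K (cmul K (cmul K (cmul K (cmul M M)))))))))) (cmul (zc (-48)%coqZ) (cmul K (cmul K (cmul K (cmul K (cmul K (cmul K (cmul K (cmul K (cmul K (cmul M (cmul M (cmul M M))))))))))))))
  | 4, 0 => (cadd (cmul (zc (-432)%coqZ) (cmul K (cmul K (cmul K (cmul K (cmul K (cmul K (cmul K (cmul K (cmul M M)))))))))) (cadd (cmul (zc (-72)%coqZ) (cmul K (cmul K (cmul K (cmul K (cmul K (cmul K (cmul K (cmul K (cmul K (cmul M (cmul M (cmul M M))))))))))))) (cmul (zc (288)%coqZ) (cmul K (cmul K (cmul K (cmul K (cmul K (cmul K (cmul K (cmul K (cmul K (cmul K (cmul M (cmul M (cmul M (cmul M (cmul M M))))))))))))))))))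
  | 4, 1 => (cadd (cmul (zc (-252)%coqZ) (cmul K (cmul K (cmul K (cmul K (cmul K (cmul K (cmul K (cmul K (cmul M (cmul M M))))))))))) (cmul (zc (-144)%coqZ) (cmul K (cmul K (cmul K (cmul K (cmul K (cmul K (cmul K (cmul K (cmul K (cmul M (cmul M (cmul M (cmul M M)))))))))))))))
  | 4, 2 => (cadd (cmul (zc (-516)%coqZ) (cmul K (cmul K (cmul K (cmul K (cmul K (cmul K (cmul K (cmul K (cmul M (cmul M M))))))))))) (cadd (cmul (zc (-348)%coqZ) (cmul K (cmul K (cmul K (cmul K (cmul K (cmul K (cmul K (cmul K (cmul K (cmul M (cmul M (cmul M (cmul M M)))))))))))))) (cmul (zc (48)%coqZ) (cmul K (cmul K (cmul K (cmul K (cmul K (cmul K (cmul K (cmul K (cmul K (cmul K (cmul M (cmul M (cmul M (cmul M (cmul M (cmul M M)))))))))))))))))))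
  | 4, 3 => (cadd (cmul (zc (540)%coqZ) (cmul K (cmul K (cmul K (cmul K (cmul K (cmul K (cmul K (cmul M M))))))))) (cadd (cmul (zc (876)%coqZ) (cmul K (cmul K (cmul K (cmul K (cmul K (cmul K (cmul K (cmul K (cmul M (cmul M (cmul M M)))))))))))) (cadd (cmul (zc (420)%coqZ) (cmul K (cmul K (cmul K (cmul K (cmul K (cmul K (cmul K (cmul K (cmul K (cmul M (cmul M (cmul M (cmul M (cmul M M))))))))))))))) (cmul (zc (48)%coqZ) (cmul K (cmul K (cmul K (cmul K (cmul K (cmul K (cmul K (cmul K (cmul K (cmul K (cmul M (cmul M (cmul M (cmul M (cmul M (cmul M (cmul M M)))))))))))))))))))))
  | 4, 4 => (cadd (cmul (zc (360)%coqZ) (cmul K (cmul K (cmul K (cmul K (cmul K (cmul K (cmul K (cmul M M))))))))) (cmul (zc (288)%coqZ) (cmul K (cmul K (cmul K (cmul K (cmul K (cmul K (cmul K (cmul K (cmul M (cmul M (cmul M M)))))))))))))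
  | 4, 5 => (cadd (cmul (zc (-90)%coqZ) (cmul K (cmul K (cmul K (cmul K (cmul K (cmul K M))))))) (cadd (cmul (zc (-252)%coqZ) (cmul K (cmul K (cmul K (cmul K (cmul K (cmul K (cmul K (cmul M (cmul M M)))))))))) (cadd (cmul (zc (-186)%coqZ) (cmul K (cmul K (cmul K (cmul K (cmul K (cmul K (cmul K (cmul K (cmul M (cmul M (cmul M (cmul M M))))))))))))) (cmul (zc (-24)%coqZ) (cmul K (cmul K (cmul K (cmul K (cmul K (cmul K (cmul K (cmul K (cmul K (cmul M (cmul M (cmul M (cmul M (cmul M (cmul M M)))))))))))))))))))
  | 4, 7 => (cadd (cmul (zc (720)%coqZ) (cmul K (cmul K (cmul K (cmul K (cmul K (cmul K (cmul K (cmul K (cmul M M)))))))))) (cadd (cmul (zc (600)%coqZ) (cmul K (cmul K (cmul K (cmul K (cmul K (cmul K (cmul K (cmul K (cmul K (cmul M (cmul M (cmul M M))))))))))))) (cmul (zc (-96)%coqZ) (cmul K (cmul K (cmul K (cmul K (cmul K (cmul K (cmul K (cmul K (cmul K (cmul K (cmul M (cmul M (cmul M (cmul M (cmul M M))))))))))))))))))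
  | 4, 8 => (cadd (cmul (zc (-360)%coqZ) (cmul K (cmul K (cmul K (cmul K (cmul K (cmul K (cmul K (cmul K (cmul M (cmul M M))))))))))) (cadd (cmul (zc (-540)%coqZ) (cmul K (cmul K (cmul K (cmul K (cmul K (cmul K (cmul K (cmul K (cmul K (cmul M (cmul M (cmul M (cmul M M)))))))))))))) (cmul (zc (-144)%coqZ) (cmul K (cmul K (cmul K (cmul K (cmul K (cmul K (cmul K (cmul K (cmul K (cmul K (cmul M (cmul M (cmul M (cmul M (cmul M (cmul M M)))))))))))))))))))
  | 4, 9 => (cadd (cmul (zc (-180)%coqZ) (cmul K (cmul K (cmul K (cmul K (cmul K (cmul K (cmul K (cmul M M))))))))) (cadd (cmul (zc (-504)%coqZ) (cmul K (cmul K (cmul K (cmul K (cmul K (cmul K (cmul K (cmul K (cmul M (cmul M (cmul M M)))))))))))) (cadd (cmul (zc (-372)%coqZ) (cmul K (cmul K (cmul K (cmul K (cmul K (cmul K (cmul K (cmul K (cmul K (cmul M (cmul M (cmul M (cmul M (cmul M M))))))))))))))) (cmul (zc (-48)%coqZ) (cmul K (cmul K (cmul K (cmul K (cmul K (cmul K (cmul K (cmul K (cmul K (cmul K (cmul M (cmul M (cmul M (cmul M (cmul M (cmul M (cmul M M)))))))))))))))))))))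
  | 4, 10 => (cadd (cmul (zc (-180)%coqZ) (cmul K (cmul K (cmul K (cmul K (cmul K (cmul K (cmul K M)))))))) (cmul (zc (-144)%coqZ) (cmul K (cmul K (cmul K (cmul K (cmul K (cmul K (cmul K (cmul K (cmul M (cmul M M))))))))))))
  | 5, 0 => (cadd (cmul (zc (144)%coqZ) (cmul K (cmul K (cmul K (cmul K (cmul K (cmul K (cmul K (cmul K (cmul K (cmul M (cmul M M)))))))))))) (cadd (cmul (zc (792)%coqZ) (cmul K (cmul K (cmul K (cmul K (cmul K (cmul K (cmul K (cmul K (cmul K (cmul K (cmul M (cmul M (cmul M (cmul M M))))))))))))))) (cmul (zc (288)%coqZ) (cmul K (cmul K (cmul K (cmul K (cmul K (cmul K (cmul K (cmul K (cmul K (cmul K (cmul K (cmul M (cmul M (cmul M (cmul M (cmul M (cmul M M))))))))))))))))))))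
  | 5, 1 => (cadd (cmul (zc (-684)%coqZ) (cmul K (cmul K (cmul K (cmul K (cmul K (cmul K (cmul K (cmul K (cmul K (cmul M (cmul M (cmul M M))))))))))))) (cmul (zc (-144)%coqZ) (cmul K (cmul K (cmul K (cmul K (cmul K (cmul K (cmul K (cmul K (cmul K (cmul K (cmul M (cmul M (cmul M (cmul M (cmul M M)))))))))))))))))
  | 5, 2 => (cadd (cmul (zc (-852)%coqZ) (cmul K (cmul K (cmul K (cmul K (cmul K (cmul K (cmul K (cmul K (cmul K (cmul M (cmul M (cmul M M))))))))))))) (cadd (cmul (zc (-204)%coqZ) (cmul K (cmul K (cmul K (cmul K (cmul K (cmul K (cmul K (cmul K (cmul K (cmul K (cmul M (cmul M (cmul M (cmul M (cmul M M)))))))))))))))) (cmul (zc (48)%coqZ) (cmul K (cmul K (cmul K (cmul K (cmul K (cmul K (cmul K (cmul K (cmul K (cmul K (cmul K (cmul M (cmul M (cmul M (cmul M (cmul M (cmul M (cmul M M)))))))))))))))))))))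
  | 5, 3 => (cadd (cmul (zc (972)%coqZ) (cmul K (cmul K (cmul K (cmul K (cmul K (cmul K (cmul K (cmul K (cmul M (cmul M M))))))))))) (cadd (cmul (zc (1308)%coqZ) (cmul K (cmul K (cmul K (cmul K (cmul K (cmul K (cmul K (cmul K (cmul K (cmul M (cmul M (cmul M (cmul M M)))))))))))))) (cadd (cmul (zc (564)%coqZ) (cmul K (cmul K (cmul K (cmul K (cmul K (cmul K (cmul K (cmul K (cmul K (cmul K (cmul M (cmul M (cmul M (cmul M (cmul M (cmul M M))))))))))))))))) (cmul (zc (48)%coqZ) (cmul K (cmul K (cmul K (cmul K (cmul K (cmul K (cmul K (cmul K (cmul K (cmul K (cmul K (cmul M (cmul M (cmul M (cmul M (cmul M (cmul M (cmul M (cmul M M)))))))))))))))))))))))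
  | 5, 4 => (cadd (cmul (zc (648)%coqZ) (cmul K (cmul K (cmul K (cmul K (cmul K (cmul K (cmul K (cmul K (cmul M (cmul M M))))))))))) (cmul (zc (288)%coqZ) (cmul K (cmul K (cmul K (cmul K (cmul K (cmul K (cmul K (cmul K (cmul K (cmul M (cmul M (cmul M (cmul M M)))))))))))))))
  | 5, 5 => (cadd (cmul (zc (-162)%coqZ) (cmul K (cmul K (cmul K (cmul K (cmul K (cmul K (cmul K (cmul M M))))))))) (cadd (cmul (zc (-396)%coqZ) (cmul K (cmul K (cmul K (cmul K (cmul K (cmul K (cmul K (cmul K (cmul M (cmul M (cmul M M)))))))))))) (cadd (cmul (zc (-258)%coqZ) (cmul K (cmul K (cmul K (cmul K (cmul K (cmul K (cmul K (cmul K (cmul K (cmul M (cmul M (cmul M (cmul M (cmul M M))))))))))))))) (cmul (zc (-24)%coqZ) (cmul K (cmul K (cmul K (cmul K (cmul K (cmul K (cmul K (cmul K (cmul K (cmul K (cmul M (cmul M (cmul M (cmul M (cmul M (cmul M (cmul M M)))))))))))))))))))))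
  | 5, 7 => (cadd (cmul (zc (-240)%coqZ) (cmul K (cmul K (cmul K (cmul K (cmul K (cmul K (cmul K (cmul K (cmul K (cmul M (cmul M M)))))))))))) (cadd (cmul (zc (-456)%coqZ) (cmul K (cmul K (cmul K (cmul K (cmul K (cmul K (cmul K (cmul K (cmul K (cmul K (cmul M (cmul M (cmul M (cmul M M))))))))))))))) (cmul (zc (-96)%coqZ) (cmul K (cmul K (cmul K (cmul K (cmul K (cmul K (cmul K (cmul K (cmul K (cmul K (cmul K (cmul M (cmul M (cmul M (cmul M (cmul M (cmul M M))))))))))))))))))))
  | 5, 8 => (cadd (cmul (zc (-648)%coqZ) (cmul K (cmul K (cmul K (cmul K (cmul K (cmul K (cmul K (cmul K (cmul K (cmul M (cmul M (cmul M M))))))))))))) (cadd (cmul (zc (-972)%coqZ) (cmul K (cmul K (cmul K (cmul K (cmul K (cmul K (cmul K (cmul K (cmul K (cmul K (cmul M (cmul M (cmul M (cmul M (cmul M M)))))))))))))))) (cmul (zc (-144)%coqZ) (cmul K (cmul K (cmul K (cmul K (cmul K (cmul K (cmul K (cmul K (cmul K (cmul K (cmul K (cmul M (cmul M (cmul M (cmul M (cmul M (cmul M (cmul M M)))))))))))))))))))))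
  | 5, 9 => (cadd (cmul (zc (-324)%coqZ) (cmul K (cmul K (cmul K (cmul K (cmul K (cmul K (cmul K (cmul K (cmul M (cmul M M))))))))))) (cadd (cmul (zc (-792)%coqZ) (cmul K (cmul K (cmul K (cmul K (cmul K (cmul K (cmul K (cmul K (cmul K (cmul M (cmul M (cmul M (cmul M M)))))))))))))) (cadd (cmul (zc (-516)%coqZ) (cmul K (cmul K (cmul K (cmul K (cmul K (cmul K (cmul K (cmul K (cmul K (cmul K (cmul M (cmul M (cmul M (cmul M (cmul M (cmul M M))))))))))))))))) (cmul (zc (-48)%coqZ) (cmul K (cmul K (cmul K (cmul K (cmul K (cmul K (cmul K (cmul K (cmul K (cmul K (cmul K (cmul M (cmul M (cmul M (cmul M (cmul M (cmul M (cmul M (cmul M M)))))))))))))))))))))))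
  | 5, 10 => (cadd (cmul (zc (-324)%coqZ) (cmul K (cmul K (cmul K (cmul K (cmul K (cmul K (cmul K (cmul K (cmul M M)))))))))) (cmul (zc (-144)%coqZ) (cmul K (cmul K (cmul K (cmul K (cmul K (cmul K (cmul K (cmul K (cmul K (cmul M (cmul M (cmul M M))))))))))))))
  | 6, 0 => (cadd (cmul (zc (-432)%coqZ) (cmul K (cmul K (cmul K (cmul K (cmul K (cmul K (cmul K (cmul K (cmul K (cmul M M))))))))))) (cadd (cmul (zc (-72)%coqZ) (cmul K (cmul K (cmul K (cmul K (cmul K (cmul K (cmul K (cmul K (cmul K (cmul K (cmul M (cmul M (cmul M M)))))))))))))) (cmul (zc (-864)%coqZ) (cmul K (cmul K (cmul K (cmul K (cmul K (cmul K (cmul K (cmul K (cmul K (cmul K (cmul K (cmul M (cmul M (cmul M (cmul M (cmul M M)))))))))))))))))))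
  | 6, 1 => (cadd (cmul (zc (-1404)%coqZ) (cmul K (cmul K (cmul K (cmul K (cmul K (cmul K (cmul K (cmul K (cmul K (cmul M (cmul M M)))))))))))) (cmul (zc (432)%coqZ) (cmul K (cmul K (cmul K (cmul K (cmul K (cmul K (cmul K (cmul K (cmul K (cmul K (cmul M (cmul M (cmul M (cmul M M))))))))))))))))
  | 6, 2 => (cadd (cmul (zc (-900)%coqZ) (cmul K (cmul K (cmul K (cmul K (cmul K (cmul K (cmul K (cmul K (cmul K (cmul M (cmul M M)))))))))))) (cadd (cmul (zc (996)%coqZ) (cmul K (cmul K (cmul K (cmul K (cmul K (cmul K (cmul K (cmul K (cmul K (cmul K (cmul M (cmul M (cmul M (cmul M M))))))))))))))) (cmul (zc (-144)%coqZ) (cmul K (cmul K (cmul K (cmul K (cmul K (cmul K (cmul K (cmul K (cmul K (cmul K (cmul K (cmul M (cmul M (cmul M (cmul M (cmul M (cmul M M))))))))))))))))))))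
  | 6, 3 => (cadd (cmul (zc (540)%coqZ) (cmul K (cmul K (cmul K (cmul K (cmul K (cmul K (cmul K (cmul K (cmul M M)))))))))) (cadd (cmul (zc (-1236)%coqZ) (cmul K (cmul K (cmul K (cmul K (cmul K (cmul K (cmul K (cmul K (cmul K (cmul M (cmul M (cmul M M))))))))))))) (cadd (cmul (zc (-1308)%coqZ) (cmul K (cmul K (cmul K (cmul K (cmul K (cmul K (cmul K (cmul K (cmul K (cmul K (cmul M (cmul M (cmul M (cmul M (cmul M M)))))))))))))))) (cmul (zc (-144)%coqZ) (cmul K (cmul K (cmul K (cmul K (cmul K (cmul K (cmul K (cmul K (cmul K (cmul K (cmul K (cmul M (cmul M (cmul M (cmul M (cmul M (cmul M (cmul M M))))))))))))))))))))))
  | 6, 4 => (cadd (cmul (zc (360)%coqZ) (cmul K (cmul K (cmul K (cmul K (cmul K (cmul K (cmul K (cmul K (cmul M M)))))))))) (cmul (zc (-864)%coqZ) (cmul K (cmul K (cmul K (cmul K (cmul K (cmul K (cmul K (cmul K (cmul K (cmul M (cmul M (cmul M M))))))))))))))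
  | 6, 5 => (cadd (cmul (zc (-90)%coqZ) (cmul K (cmul K (cmul K (cmul K (cmul K (cmul K (cmul K M)))))))) (cadd (cmul (zc (420)%coqZ) (cmul K (cmul K (cmul K (cmul K (cmul K (cmul K (cmul K (cmul K (cmul M (cmul M M))))))))))) (cadd (cmul (zc (582)%coqZ) (cmul K (cmul K (cmul K (cmul K (cmul K (cmul K (cmul K (cmul K (cmul K (cmul M (cmul M (cmul M (cmul M M)))))))))))))) (cmul (zc (72)%coqZ) (cmul K (cmul K (cmul K (cmul K (cmul K (cmul K (cmul K (cmul K (cmul K (cmul K (cmul M (cmul M (cmul M (cmul M (cmul M (cmul M M))))))))))))))))))))
  | 6, 7 => (cadd (cmul (zc (720)%coqZ) (cmul K (cmul K (cmul K (cmul K (cmul K (cmul K (cmul K (cmul K (cmul K (cmul M M))))))))))) (cadd (cmul (zc (600)%coqZ) (cmul K (cmul K (cmul K (cmul K (cmul K (cmul K (cmul K (cmul K (cmul K (cmul K (cmul M (cmul M (cmul M M)))))))))))))) (cmul (zc (288)%coqZ) (cmul K (cmul K (cmul K (cmul K (cmul K (cmul K (cmul K (cmul K (cmul K (cmul K (cmul K (cmul M (cmul M (cmul M (cmul M (cmul M M)))))))))))))))))))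
  | 6, 8 => (cadd (cmul (zc (1944)%coqZ) (cmul K (cmul K (cmul K (cmul K (cmul K (cmul K (cmul K (cmul K (cmul K (cmul M (cmul M M)))))))))))) (cadd (cmul (zc (1764)%coqZ) (cmul K (cmul K (cmul K (cmul K (cmul K (cmul K (cmul K (cmul K (cmul K (cmul K (cmul M (cmul M (cmul M (cmul M M))))))))))))))) (cmul (zc (432)%coqZ) (cmul K (cmul K (cmul K (cmul K (cmul K (cmul K (cmul K (cmul K (cmul K (cmul K (cmul K (cmul M (cmul M (cmul M (cmul M (cmul M (cmul M M))))))))))))))))))))
  | 6, 9 => (cadd (cmul (zc (-180)%coqZ) (cmul K (cmul K (cmul K (cmul K (cmul K (cmul K (cmul K (cmul K (cmul M M)))))))))) (cadd (cmul (zc (840)%coqZ) (cmul K (cmul K (cmul K (cmul K (cmul K (cmul K (cmul K (cmul K (cmul K (cmul M (cmul M (cmul M M))))))))))))) (cadd (cmul (zc (1164)%coqZ) (cmul K (cmul K (cmul K (cmul K (cmul K (cmul K (cmul K (cmul K (cmul K (cmul K (cmul M (cmul M (cmul M (cmul M (cmul M M)))))))))))))))) (cmul (zc (144)%coqZ) (cmul K (cmul K (cmul K (cmul K (cmul K (cmul K (cmul K (cmul K (cmul K (cmul K (cmul K (cmul M (cmul M (cmul M (cmul M (cmul M (cmul M (cmul M M))))))))))))))))))))))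
  | 6, 10 => (cadd (cmul (zc (-180)%coqZ) (cmul K (cmul K (cmul K (cmul K (cmul K (cmul K (cmul K (cmul K M))))))))) (cmul (zc (432)%coqZ) (cmul K (cmul K (cmul K (cmul K (cmul K (cmul K (cmul K (cmul K (cmul K (cmul M (cmul M M)))))))))))))
  | 7, 0 => (cadd (cmul (zc (-864)%coqZ) (cmul K (cmul K (cmul K (cmul K (cmul K (cmul K (cmul K (cmul K (cmul K (cmul M (cmul M M)))))))))))) (cadd (cmul (zc (-3408)%coqZ) (cmul K (cmul K (cmul K (cmul K (cmul K (cmul K (cmul K (cmul K (cmul K (cmul K (cmul M (cmul M (cmul M (cmul M M))))))))))))))) (cadd (cmul (zc (-2784)%coqZ) (cmul K (cmul K (cmul K (cmul K (cmul K (cmul K (cmul K (cmul K (cmul K (cmul K (cmul K (cmul M (cmul M (cmul M (cmul M (cmul M (cmul M M)))))))))))))))))) (cmul (zc (-384)%coqZ) (cmul K (cmul K (cmul K (cmul K (cmul K (cmul K (cmul K (cmul K (cmul K (cmul K (cmul K (cmul K (cmul M (cmul M (cmul M (cmul M (cmul M (cmul M (cmul M (cmul M M))))))))))))))))))))))))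
  | 7, 1 => (cadd (cmul (zc (1800)%coqZ) (cmul K (cmul K (cmul K (cmul K (cmul K (cmul K (cmul K (cmul K (cmul K (cmul M (cmul M (cmul M M))))))))))))) (cadd (cmul (zc (1776)%coqZ) (cmul K (cmul K (cmul K (cmul K (cmul K (cmul K (cmul K (cmul K (cmul K (cmul K (cmul M (cmul M (cmul M (cmul M (cmul M M)))))))))))))))) (cmul (zc (192)%coqZ) (cmul K (cmul K (cmul K (cmul K (cmul K (cmul K (cmul K (cmul K (cmul K (cmul K (cmul K (cmul M (cmul M (cmul M (cmul M (cmul M (cmul M (cmul M M)))))))))))))))))))))
  | 7, 2 => (cadd (cmul (zc (2808)%coqZ) (cmul K (cmul K (cmul K (cmul K (cmul K (cmul K (cmul K (cmul K (cmul K (cmul M (cmul M (cmul M M))))))))))))) (cadd (cmul (zc (2616)%coqZ) (cmul K (cmul K (cmul K (cmul K (cmul K (cmul K (cmul K (cmul K (cmul K (cmul K (cmul M (cmul M (cmul M (cmul M (cmul M M)))))))))))))))) (cadd (cmul (zc (-16)%coqZ) (cmul K (cmul K (cmul K (cmul K (cmul K (cmul K (cmul K (cmul K (cmul K (cmul K (cmul K (cmul M (cmul M (cmul M (cmul M (cmul M (cmul M (cmul M M))))))))))))))))))) (cmul (zc (-64)%coqZ) (cmul K (cmul K (cmul K (cmul K (cmul K (cmul K (cmul K (cmul K (cmul K (cmul K (cmul K (cmul K (cmul M (cmul M (cmul M (cmul M (cmul M (cmul M (cmul M (cmul M (cmul M M)))))))))))))))))))))))))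
  | 7, 3 => (cadd (cmul (zc (-3528)%coqZ) (cmul K (cmul K (cmul K (cmul K (cmul K (cmul K (cmul K (cmul K (cmul M (cmul M M))))))))))) (cadd (cmul (zc (-6840)%coqZ) (cmul K (cmul K (cmul K (cmul K (cmul K (cmul K (cmul K (cmul K (cmul K (cmul M (cmul M (cmul M (cmul M M)))))))))))))) (cadd (cmul (zc (-4360)%coqZ) (cmul K (cmul K (cmul K (cmul K (cmul K (cmul K (cmul K (cmul K (cmul K (cmul K (cmul M (cmul M (cmul M (cmul M (cmul M (cmul M M))))))))))))))))) (cadd (cmul (zc (-1040)%coqZ) (cmul K (cmul K (cmul K (cmul K (cmul K (cmul K (cmul K (cmul K (cmul K (cmul K (cmul K (cmul M (cmul M (cmul M (cmul M (cmul M (cmul M (cmul M (cmul M M)))))))))))))))))))) (cmul (zc (-64)%coqZ) (cmul K (cmul K (cmul K (cmul K (cmul K (cmul K (cmul K (cmul K (cmul K (cmul K (cmul K (cmul K (cmul M (cmul M (cmul M (cmul M (cmul M (cmul M (cmul M (cmul M (cmul M (cmul M M)))))))))))))))))))))))))))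
  | 7, 4 => (cadd (cmul (zc (-1584)%coqZ) (cmul K (cmul K (cmul K (cmul K (cmul K (cmul K (cmul K (cmul K (cmul M (cmul M M))))))))))) (cadd (cmul (zc (-1824)%coqZ) (cmul K (cmul K (cmul K (cmul K (cmul K (cmul K (cmul K (cmul K (cmul K (cmul M (cmul M (cmul M (cmul M M)))))))))))))) (cmul (zc (-384)%coqZ) (cmul K (cmul K (cmul K (cmul K (cmul K (cmul K (cmul K (cmul K (cmul K (cmul K (cmul M (cmul M (cmul M (cmul M (cmul M (cmul M M)))))))))))))))))))
  | 7, 5 => (cadd (cmul (zc (588)%coqZ) (cmul K (cmul K (cmul K (cmul K (cmul K (cmul K (cmul K (cmul M M))))))))) (cadd (cmul (zc (1824)%coqZ) (cmul K (cmul K (cmul K (cmul K (cmul K (cmul K (cmul K (cmul K (cmul M (cmul M (cmul M M)))))))))))) (cadd (cmul (zc (1692)%coqZ) (cmul K (cmul K (cmul K (cmul K (cmul K (cmul K (cmul K (cmul K (cmul K (cmul M (cmul M (cmul M (cmul M (cmul M M))))))))))))))) (cadd (cmul (zc (488)%coqZ) (cmul K (cmul K (cmul K (cmul K (cmul K (cmul K (cmul K (cmul K (cmul K (cmul K (cmul M (cmul M (cmul M (cmul M (cmul M (cmul M (cmul M M)))))))))))))))))) (cmul (zc (32)%coqZ) (cmul K (cmul K (cmul K (cmul K (cmul K (cmul K (cmul K (cmul K (cmul K (cmul K (cmul K (cmul M (cmul M (cmul M (cmul M (cmul M (cmul M (cmul M (cmul M (cmul M M)))))))))))))))))))))))))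
  | 7, 7 => (cadd (cmul (zc (1440)%coqZ) (cmul K (cmul K (cmul K (cmul K (cmul K (cmul K (cmul K (cmul K (cmul K (cmul M (cmul M M)))))))))))) (cadd (cmul (zc (2544)%coqZ) (cmul K (cmul K (cmul K (cmul K (cmul K (cmul K (cmul K (cmul K (cmul K (cmul K (cmul M (cmul M (cmul M (cmul M M))))))))))))))) (cadd (cmul (zc (1184)%coqZ) (cmul K (cmul K (cmul K (cmul K (cmul K (cmul K (cmul K (cmul K (cmul K (cmul K (cmul K (cmul M (cmul M (cmul M (cmul M (cmul M (cmul M M)))))))))))))))))) (cmul (zc (128)%coqZ) (cmul K (cmul K (cmul K (cmul K (cmul K (cmul K (cmul K (cmul K (cmul K (cmul K (cmul K (cmul K (cmul M (cmul M (cmul M (cmul M (cmul M (cmul M (cmul M (cmul M M))))))))))))))))))))))))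
  | 7, 8 => (cadd (cmul (zc (3888)%coqZ) (cmul K (cmul K (cmul K (cmul K (cmul K (cmul K (cmul K (cmul K (cmul K (cmul M (cmul M (cmul M M))))))))))))) (cadd (cmul (zc (5928)%coqZ) (cmul K (cmul K (cmul K (cmul K (cmul K (cmul K (cmul K (cmul K (cmul K (cmul K (cmul M (cmul M (cmul M (cmul M (cmul M M)))))))))))))))) (cadd (cmul (zc (2160)%coqZ) (cmul K (cmul K (cmul K (cmul K (cmul K (cmul K (cmul K (cmul K (cmul K (cmul K (cmul K (cmul M (cmul M (cmul M (cmul M (cmul M (cmul M (cmul M M))))))))))))))))))) (cmul (zc (192)%coqZ) (cmul K (cmul K (cmul K (cmul K (cmul K (cmul K (cmul K (cmul K (cmul K (cmul K (cmul K (cmul K (cmul M (cmul M (cmul M (cmul M (cmul M (cmul M (cmul M (cmul M (cmul M M)))))))))))))))))))))))))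
  | 7, 9 => (cadd (cmul (zc (1176)%coqZ) (cmul K (cmul K (cmul K (cmul K (cmul K (cmul K (cmul K (cmul K (cmul M (cmul M M))))))))))) (cadd (cmul (zc (3648)%coqZ) (cmul K (cmul K (cmul K (cmul K (cmul K (cmul K (cmul K (cmul K (cmul K (cmul M (cmul M (cmul M (cmul M M)))))))))))))) (cadd (cmul (zc (3384)%coqZ) (cmul K (cmul K (cmul K (cmul K (cmul K (cmul K (cmul K (cmul K (cmul K (cmul K (cmul M (cmul M (cmul M (cmul M (cmul M (cmul M M))))))))))))))))) (cadd (cmul (zc (976)%coqZ) (cmul K (cmul K (cmul K (cmul K (cmul K (cmul K (cmul K (cmul K (cmul K (cmul K (cmul K (cmul M (cmul M (cmul M (cmul M (cmul M (cmul M (cmul M (cmul M M)))))))))))))))))))) (cmul (zc (64)%coqZ) (cmul K (cmul K (cmul K (cmul K (cmul K (cmul K (cmul K (cmul K (cmul K (cmul K (cmul K (cmul K (cmul M (cmul M (cmul M (cmul M (cmul M (cmul M (cmul M (cmul M (cmul M (cmul M M)))))))))))))))))))))))))))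
  | 7, 10 => (cadd (cmul (zc (1176)%coqZ) (cmul K (cmul K (cmul K (cmul K (cmul K (cmul K (cmul K (cmul K (cmul M M)))))))))) (cadd (cmul (zc (1296)%coqZ) (cmul K (cmul K (cmul K (cmul K (cmul K (cmul K (cmul K (cmul K (cmul K (cmul M (cmul M (cmul M M))))))))))))) (cmul (zc (192)%coqZ) (cmul K (cmul K (cmul K (cmul K (cmul K (cmul K (cmul K (cmul K (cmul K (cmul K (cmul M (cmul M (cmul M (cmul M (cmul M M))))))))))))))))))
  | 8, 0 => (cadd (cmul (zc (288)%coqZ) (cmul K (cmul K (cmul K (cmul K (cmul K (cmul K (cmul K (cmul K (cmul K (cmul M M))))))))))) (cadd (cmul (zc (240)%coqZ) (cmul K (cmul K (cmul K (cmul K (cmul K (cmul K (cmul K (cmul K (cmul K (cmul K (cmul M (cmul M (cmul M M)))))))))))))) (cadd (cmul (zc (1632)%coqZ) (cmul K (cmul K (cmul K (cmul K (cmul K (cmul K (cmul K (cmul K (cmul K (cmul K (cmul K (cmul M (cmul M (cmul M (cmul M (cmul M M))))))))))))))))) (cmul (zc (384)%coqZ) (cmul K (cmul K (cmul K (cmul K (cmul K (cmul K (cmul K (cmul K (cmul K (cmul K (cmul K (cmul K (cmul M (cmul M (cmul M (cmul M (cmul M (cmul M (cmul M M)))))))))))))))))))))))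
  | 8, 1 => (cadd (cmul (zc (936)%coqZ) (cmul K (cmul K (cmul K (cmul K (cmul K (cmul K (cmul K (cmul K (cmul K (cmul M (cmul M M)))))))))))) (cadd (cmul (zc (-1200)%coqZ) (cmul K (cmul K (cmul K (cmul K (cmul K (cmul K (cmul K (cmul K (cmul K (cmul K (cmul M (cmul M (cmul M (cmul M M))))))))))))))) (cmul (zc (-192)%coqZ) (cmul K (cmul K (cmul K (cmul K (cmul K (cmul K (cmul K (cmul K (cmul K (cmul K (cmul K (cmul M (cmul M (cmul M (cmul M (cmul M (cmul M M))))))))))))))))))))
  | 8, 2 => (cadd (cmul (zc (600)%coqZ) (cmul K (cmul K (cmul K (cmul K (cmul K (cmul K (cmul K (cmul K (cmul K (cmul M (cmul M M)))))))))))) (cadd (cmul (zc (-1800)%coqZ) (cmul K (cmul K (cmul K (cmul K (cmul K (cmul K (cmul K (cmul K (cmul K (cmul K (cmul M (cmul M (cmul M (cmul M M))))))))))))))) (cadd (cmul (zc (-176)%coqZ) (cmul K (cmul K (cmul K (cmul K (cmul K (cmul K (cmul K (cmul K (cmul K (cmul K (cmul K (cmul M (cmul M (cmul M (cmul M (cmul M (cmul M M)))))))))))))))))) (cmul (zc (64)%coqZ) (cmul K (cmul K (cmul K (cmul K (cmul K (cmul K (cmul K (cmul K (cmul K (cmul K (cmul K (cmul K (cmul M (cmul M (cmul M (cmul M (cmul M (cmul M (cmul M (cmul M M))))))))))))))))))))))))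
  | 8, 3 => (cadd (cmul (zc (-360)%coqZ) (cmul K (cmul K (cmul K (cmul K (cmul K (cmul K (cmul K (cmul K (cmul M M)))))))))) (cadd (cmul (zc (1608)%coqZ) (cmul K (cmul K (cmul K (cmul K (cmul K (cmul K (cmul K (cmul K (cmul K (cmul M (cmul M (cmul M M))))))))))))) (cadd (cmul (zc (2104)%coqZ) (cmul K (cmul K (cmul K (cmul K (cmul K (cmul K (cmul K (cmul K (cmul K (cmul K (cmul M (cmul M (cmul M (cmul M (cmul M M)))))))))))))))) (cadd (cmul (zc (848)%coqZ) (cmul K (cmul K (cmul K (cmul K (cmul K (cmul K (cmul K (cmul K (cmul K (cmul K (cmul K (cmul M (cmul M (cmul M (cmul M (cmul M (cmul M (cmul M M))))))))))))))))))) (cmul (zc (64)%coqZ) (cmul K (cmul K (cmul K (cmul K (cmul K (cmul K (cmul K (cmul K (cmul K (cmul K (cmul K (cmul K (cmul M (cmul M (cmul M (cmul M (cmul M (cmul M (cmul M (cmul M (cmul M M))))))))))))))))))))))))))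
  | 8, 4 => (cadd (cmul (zc (-240)%coqZ) (cmul K (cmul K (cmul K (cmul K (cmul K (cmul K (cmul K (cmul K (cmul M M)))))))))) (cadd (cmul (zc (1440)%coqZ) (cmul K (cmul K (cmul K (cmul K (cmul K (cmul K (cmul K (cmul K (cmul K (cmul M (cmul M (cmul M M))))))))))))) (cmul (zc (384)%coqZ) (cmul K (cmul K (cmul K (cmul K (cmul K (cmul K (cmul K (cmul K (cmul K (cmul K (cmul M (cmul M (cmul M (cmul M (cmul M M))))))))))))))))))
  | 8, 5 => (cadd (cmul (zc (60)%coqZ) (cmul K (cmul K (cmul K (cmul K (cmul K (cmul K (cmul K M)))))))) (cadd (cmul (zc (-240)%coqZ) (cmul K (cmul K (cmul K (cmul K (cmul K (cmul K (cmul K (cmul K (cmul M (cmul M M))))))))))) (cadd (cmul (zc (-660)%coqZ) (cmul K (cmul K (cmul K (cmul K (cmul K (cmul K (cmul K (cmul K (cmul K (cmul M (cmul M (cmul M (cmul M M)))))))))))))) (cadd (cmul (zc (-392)%coqZ) (cmul K (cmul K (cmul K (cmul K (cmul K (cmul K (cmul K (cmul K (cmul K (cmul K (cmul M (cmul M (cmul M (cmul M (cmul M (cmul M M))))))))))))))))) (cmul (zc (-32)%coqZ) (cmul K (cmul K (cmul K (cmul K (cmul K (cmul K (cmul K (cmul K (cmul K (cmul K (cmul K (cmul M (cmul M (cmul M (cmul M (cmul M (cmul M (cmul M (cmul M M))))))))))))))))))))))))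
  | 8, 7 => (cadd (cmul (zc (-480)%coqZ) (cmul K (cmul K (cmul K (cmul K (cmul K (cmul K (cmul K (cmul K (cmul K (cmul M M))))))))))) (cadd (cmul (zc (-720)%coqZ) (cmul K (cmul K (cmul K (cmul K (cmul K (cmul K (cmul K (cmul K (cmul K (cmul K (cmul M (cmul M (cmul M M)))))))))))))) (cadd (cmul (zc (-800)%coqZ) (cmul K (cmul K (cmul K (cmul K (cmul K (cmul K (cmul K (cmul K (cmul K (cmul K (cmul K (cmul M (cmul M (cmul M (cmul M (cmul M M))))))))))))))))) (cmul (zc (-128)%coqZ) (cmul K (cmul K (cmul K (cmul K (cmul K (cmul K (cmul K (cmul K (cmul K (cmul K (cmul K (cmul K (cmul M (cmul M (cmul M (cmul M (cmul M (cmul M (cmul M M)))))))))))))))))))))))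
  | 8, 8 => (cadd (cmul (zc (-1296)%coqZ) (cmul K (cmul K (cmul K (cmul K (cmul K (cmul K (cmul K (cmul K (cmul K (cmul M (cmul M M)))))))))))) (cadd (cmul (zc (-2040)%coqZ) (cmul K (cmul K (cmul K (cmul K (cmul K (cmul K (cmul K (cmul K (cmul K (cmul K (cmul M (cmul M (cmul M (cmul M M))))))))))))))) (cadd (cmul (zc (-1584)%coqZ) (cmul K (cmul K (cmul K (cmul K (cmul K (cmul K (cmul K (cmul K (cmul K (cmul K (cmul K (cmul M (cmul M (cmul M (cmul M (cmul M (cmul M M)))))))))))))))))) (cmul (zc (-192)%coqZ) (cmul K (cmul K (cmul K (cmul K (cmul K (cmul K (cmul K (cmul K (cmul K (cmul K (cmul K (cmul K (cmul M (cmul M (cmul M (cmul M (cmul M (cmul M (cmul M (cmul M M))))))))))))))))))))))))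
  | 8, 9 => (cadd (cmul (zc (120)%coqZ) (cmul K (cmul K (cmul K (cmul K (cmul K (cmul K (cmul K (cmul K (cmul M M)))))))))) (cadd (cmul (zc (-480)%coqZ) (cmul K (cmul K (cmul K (cmul K (cmul K (cmul K (cmul K (cmul K (cmul K (cmul M (cmul M (cmul M M))))))))))))) (cadd (cmul (zc (-1320)%coqZ) (cmul K (cmul K (cmul K (cmul K (cmul K (cmul K (cmul K (cmul K (cmul K (cmul K (cmul M (cmul M (cmul M (cmul M (cmul M M)))))))))))))))) (cadd (cmul (zc (-784)%coqZ) (cmul K (cmul K (cmul K (cmul K (cmul K (cmul K (cmul K (cmul K (cmul K (cmul K (cmul K (cmul M (cmul M (cmul M (cmul M (cmul M (cmul M (cmul M M))))))))))))))))))) (cmul (zc (-64)%coqZ) (cmul K (cmul K (cmul K (cmul K (cmul K (cmul K (cmul K (cmul K (cmul K (cmul K (cmul K (cmul K (cmul M (cmul M (cmul M (cmul M (cmul M (cmul M (cmul M (cmul M (cmul M M))))))))))))))))))))))))))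
  | 8, 10 => (cadd (cmul (zc (120)%coqZ) (cmul K (cmul K (cmul K (cmul K (cmul K (cmul K (cmul K (cmul K M))))))))) (cadd (cmul (zc (-720)%coqZ) (cmul K (cmul K (cmul K (cmul K (cmul K (cmul K (cmul K (cmul K (cmul K (cmul M (cmul M M)))))))))))) (cmul (zc (-192)%coqZ) (cmul K (cmul K (cmul K (cmul K (cmul K (cmul K (cmul K (cmul K (cmul K (cmul K (cmul M (cmul M (cmul M (cmul M M)))))))))))))))))
  | 9, 0 => (cadd (cmul (zc (-576)%coqZ) (cmul K (cmul K (cmul K (cmul K (cmul K (cmul K (cmul K (cmul K (cmul K (cmul K (cmul M (cmul M M))))))))))))) (cadd (cmul (zc (-3168)%coqZ) (cmul K (cmul K (cmul K (cmul K (cmul K (cmul K (cmul K (cmul K (cmul K (cmul K (cmul K (cmul M (cmul M (cmul M (cmul M M)))))))))))))))) (cmul (zc (-1152)%coqZ) (cmul K (cmul K (cmul K (cmul K (cmul K (cmul K (cmul K (cmul K (cmul K (cmul K (cmul K (cmul K (cmul M (cmul M (cmul M (cmul M (cmul M (cmul M M)))))))))))))))))))))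
  | 9, 1 => (cadd (cmul (zc (2736)%coqZ) (cmul K (cmul K (cmul K (cmul K (cmul K (cmul K (cmul K (cmul K (cmul K (cmul K (cmul M (cmul M (cmul M M)))))))))))))) (cmul (zc (576)%coqZ) (cmul K (cmul K (cmul K (cmul K (cmul K (cmul K (cmul K (cmul K (cmul K (cmul K (cmul K (cmul M (cmul M (cmul M (cmul M (cmul M M))))))))))))))))))
  | 9, 2 => (cadd (cmul (zc (3408)%coqZ) (cmul K (cmul K (cmul K (cmul K (cmul K (cmul K (cmul K (cmul K (cmul K (cmul K (cmul M (cmul M (cmul M M)))))))))))))) (cadd (cmul (zc (816)%coqZ) (cmul K (cmul K (cmul K (cmul K (cmul K (cmul K (cmul K (cmul K (cmul K (cmul K (cmul K (cmul M (cmul M (cmul M (cmul M (cmul M M))))))))))))))))) (cmul (zc (-192)%coqZ) (cmul K (cmul K (cmul K (cmul K (cmul K (cmul K (cmul K (cmul K (cmul K (cmul K (cmul K (cmul K (cmul M (cmul M (cmul M (cmul M (cmul M (cmul M (cmul M M))))))))))))))))))))))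
  | 9, 3 => (cadd (cmul (zc (-2352)%coqZ) (cmul K (cmul K (cmul K (cmul K (cmul K (cmul K (cmul K (cmul K (cmul K (cmul M (cmul M M)))))))))))) (cadd (cmul (zc (-3696)%coqZ) (cmul K (cmul K (cmul K (cmul K (cmul K (cmul K (cmul K (cmul K (cmul K (cmul K (cmul M (cmul M (cmul M (cmul M M))))))))))))))) (cadd (cmul (zc (-2256)%coqZ) (cmul K (cmul K (cmul K (cmul K (cmul K (cmul K (cmul K (cmul K (cmul K (cmul K (cmul K (cmul M (cmul M (cmul M (cmul M (cmul M (cmul M M)))))))))))))))))) (cmul (zc (-192)%coqZ) (cmul K (cmul K (cmul K (cmul K (cmul K (cmul K (cmul K (cmul K (cmul K (cmul K (cmul K (cmul K (cmul M (cmul M (cmul M (cmul M (cmul M (cmul M (cmul M (cmul M M))))))))))))))))))))))))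
  | 9, 4 => (cadd (cmul (zc (-2592)%coqZ) (cmul K (cmul K (cmul K (cmul K (cmul K (cmul K (cmul K (cmul K (cmul K (cmul M (cmul M M)))))))))))) (cmul (zc (-1152)%coqZ) (cmul K (cmul K (cmul K (cmul K (cmul K (cmul K (cmul K (cmul K (cmul K (cmul K (cmul M (cmul M (cmul M (cmul M M))))))))))))))))
  | 9, 5 => (cadd (cmul (zc (648)%coqZ) (cmul K (cmul K (cmul K (cmul K (cmul K (cmul K (cmul K (cmul K (cmul M M)))))))))) (cadd (cmul (zc (1584)%coqZ) (cmul K (cmul K (cmul K (cmul K (cmul K (cmul K (cmul K (cmul K (cmul K (cmul M (cmul M (cmul M M))))))))))))) (cadd (cmul (zc (1032)%coqZ) (cmul K (cmul K (cmul K (cmul K (cmul K (cmul K (cmul K (cmul K (cmul K (cmul K (cmul M (cmul M (cmul M (cmul M (cmul M M)))))))))))))))) (cmul (zc (96)%coqZ) (cmul K (cmul K (cmul K (cmul K (cmul K (cmul K (cmul K (cmul K (cmul K (cmul K (cmul K (cmul M (cmul M (cmul M (cmul M (cmul M (cmul M (cmul M M))))))))))))))))))))))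
  | 9, 7 => (cadd (cmul (zc (960)%coqZ) (cmul K (cmul K (cmul K (cmul K (cmul K (cmul K (cmul K (cmul K (cmul K (cmul K (cmul M (cmul M M))))))))))))) (cadd (cmul (zc (1824)%coqZ) (cmul K (cmul K (cmul K (cmul K (cmul K (cmul K (cmul K (cmul K (cmul K (cmul K (cmul K (cmul M (cmul M (cmul M (cmul M M)))))))))))))))) (cmul (zc (384)%coqZ) (cmul K (cmul K (cmul K (cmul K (cmul K (cmul K (cmul K (cmul K (cmul K (cmul K (cmul K (cmul K (cmul M (cmul M (cmul M (cmul M (cmul M (cmul M M)))))))))))))))))))))
  | 9, 8 => (cadd (cmul (zc (2592)%coqZ) (cmul K (cmul K (cmul K (cmul K (cmul K (cmul K (cmul K (cmul K (cmul K (cmul K (cmul M (cmul M (cmul M M)))))))))))))) (cadd (cmul (zc (3888)%coqZ) (cmul K (cmul K (cmul K (cmul K (cmul K (cmul K (cmul K (cmul K (cmul K (cmul K (cmul K (cmul M (cmul M (cmul M (cmul M (cmul M M))))))))))))))))) (cmul (zc (576)%coqZ) (cmul K (cmul K (cmul K (cmul K (cmul K (cmul K (cmul K (cmul K (cmul K (cmul K (cmul K (cmul K (cmul M (cmul M (cmul M (cmul M (cmul M (cmul M (cmul M M))))))))))))))))))))))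
  | 9, 9 => (cadd (cmul (zc (-240)%coqZ) (cmul K (cmul K (cmul K (cmul K (cmul K (cmul K (cmul K (cmul K (cmul K (cmul M (cmul M M)))))))))))) (cadd (cmul (zc (1632)%coqZ) (cmul K (cmul K (cmul K (cmul K (cmul K (cmul K (cmul K (cmul K (cmul K (cmul K (cmul M (cmul M (cmul M (cmul M M))))))))))))))) (cadd (cmul (zc (2064)%coqZ) (cmul K (cmul K (cmul K (cmul K (cmul K (cmul K (cmul K (cmul K (cmul K (cmul K (cmul K (cmul M (cmul M (cmul M (cmul M (cmul M (cmul M M)))))))))))))))))) (cmul (zc (192)%coqZ) (cmul K (cmul K (cmul K (cmul K (cmul K (cmul K (cmul K (cmul K (cmul K (cmul K (cmul K (cmul K (cmul M (cmul M (cmul M (cmul M (cmul M (cmul M (cmul M (cmul M M))))))))))))))))))))))))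
  | 9, 10 => (cadd (cmul (zc (1296)%coqZ) (cmul K (cmul K (cmul K (cmul K (cmul K (cmul K (cmul K (cmul K (cmul K (cmul M M))))))))))) (cmul (zc (576)%coqZ) (cmul K (cmul K (cmul K (cmul K (cmul K (cmul K (cmul K (cmul K (cmul K (cmul K (cmul M (cmul M (cmul M M)))))))))))))))
  | 10, 0 => (cadd (cmul (zc (2880)%coqZ) (cmul K (cmul K (cmul K (cmul K (cmul K (cmul K (cmul K (cmul K (cmul K (cmul K (cmul M M)))))))))))) (cadd (cmul (zc (15840)%coqZ) (cmul K (cmul K (cmul K (cmul K (cmul K (cmul K (cmul K (cmul K (cmul K (cmul K (cmul K (cmul M (cmul M (cmul M M))))))))))))))) (cmul (zc (5760)%coqZ) (cmul K (cmul K (cmul K (cmul K (cmul K (cmul K (cmul K (cmul K (cmul K (cmul K (cmul K (cmul K (cmul M (cmul M (cmul M (cmul M (cmul M M))))))))))))))))))))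
  | 10, 1 => (cadd (cmul (zc (-13680)%coqZ) (cmul K (cmul K (cmul K (cmul K (cmul K (cmul K (cmul K (cmul K (cmul K (cmul K (cmul M (cmul M M))))))))))))) (cmul (zc (-2880)%coqZ) (cmul K (cmul K (cmul K (cmul K (cmul K (cmul K (cmul K (cmul K (cmul K (cmul K (cmul K (cmul M (cmul M (cmul M (cmul M M)))))))))))))))))
  | 10, 2 => (cadd (cmul (zc (-17040)%coqZ) (cmul K (cmul K (cmul K (cmul K (cmul K (cmul K (cmul K (cmul K (cmul K (cmul K (cmul M (cmul M M))))))))))))) (cadd (cmul (zc (-4080)%coqZ) (cmul K (cmul K (cmul K (cmul K (cmul K (cmul K (cmul K (cmul K (cmul K (cmul K (cmul K (cmul M (cmul M (cmul M (cmul M M)))))))))))))))) (cmul (zc (960)%coqZ) (cmul K (cmul K (cmul K (cmul K (cmul K (cmul K (cmul K (cmul K (cmul K (cmul K (cmul K (cmul K (cmul M (cmul M (cmul M (cmul M (cmul M (cmul M M)))))))))))))))))))))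
  | 10, 3 => (cadd (cmul (zc (11760)%coqZ) (cmul K (cmul K (cmul K (cmul K (cmul K (cmul K (cmul K (cmul K (cmul K (cmul M M))))))))))) (cadd (cmul (zc (18480)%coqZ) (cmul K (cmul K (cmul K (cmul K (cmul K (cmul K (cmul K (cmul K (cmul K (cmul K (cmul M (cmul M (cmul M M)))))))))))))) (cadd (cmul (zc (11280)%coqZ) (cmul K (cmul K (cmul K (cmul K (cmul K (cmul K (cmul K (cmul K (cmul K (cmul K (cmul K (cmul M (cmul M (cmul M (cmul M (cmul M M))))))))))))))))) (cmul (zc (960)%coqZ) (cmul K (cmul K (cmul K (cmul K (cmul K (cmul K (cmul K (cmul K (cmul K (cmul K (cmul K (cmul K (cmul M (cmul M (cmul M (cmul M (cmul M (cmul M (cmul M M)))))))))))))))))))))))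
  | 10, 4 => (cadd (cmul (zc (12960)%coqZ) (cmul K (cmul K (cmul K (cmul K (cmul K (cmul K (cmul K (cmul K (cmul K (cmul M M))))))))))) (cmul (zc (5760)%coqZ) (cmul K (cmul K (cmul K (cmul K (cmul K (cmul K (cmul K (cmul K (cmul K (cmul K (cmul M (cmul M (cmul M M)))))))))))))))
  | 10, 5 => (cadd (cmul (zc (-3240)%coqZ) (cmul K (cmul K (cmul K (cmul K (cmul K (cmul K (cmul K (cmul K M))))))))) (cadd (cmul (zc (-7920)%coqZ) (cmul K (cmul K (cmul K (cmul K (cmul K (cmul K (cmul K (cmul K (cmul K (cmul M (cmul M M)))))))))))) (cadd (cmul (zc (-5160)%coqZ) (cmul K (cmul K (cmul K (cmul K (cmul K (cmul K (cmul K (cmul K (cmul K (cmul K (cmul M (cmul M (cmul M (cmul M M))))))))))))))) (cmul (zc (-480)%coqZ) (cmul K (cmul K (cmul K (cmul K (cmul K (cmul K (cmul K (cmul K (cmul K (cmul K (cmul K (cmul M (cmul M (cmul M (cmul M (cmul M (cmul M M)))))))))))))))))))))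
  | 10, 6 => (cadd (cmul (zc (768)%coqZ) (cmul K (cmul K (cmul K (cmul K (cmul K (cmul K (cmul K (cmul K (cmul M M)))))))))) (cmul (zc (768)%coqZ) (cmul K (cmul K (cmul K (cmul K (cmul K (cmul K (cmul K (cmul K (cmul K (cmul M (cmul M (cmul M M))))))))))))))
  | 10, 7 => (cadd (cmul (zc (-4800)%coqZ) (cmul K (cmul K (cmul K (cmul K (cmul K (cmul K (cmul K (cmul K (cmul K (cmul K (cmul M M)))))))))))) (cadd (cmul (zc (-9120)%coqZ) (cmul K (cmul K (cmul K (cmul K (cmul K (cmul K (cmul K (cmul K (cmul K (cmul K (cmul K (cmul M (cmul M (cmul M M))))))))))))))) (cmul (zc (-1920)%coqZ) (cmul K (cmul K (cmul K (cmul K (cmul K (cmul K (cmul K (cmul K (cmul K (cmul K (cmul K (cmul K (cmul M (cmul M (cmul M (cmul M (cmul M M))))))))))))))))))))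
  | 10, 8 => (cadd (cmul (zc (-12960)%coqZ) (cmul K (cmul K (cmul K (cmul K (cmul K (cmul K (cmul K (cmul K (cmul K (cmul K (cmul M (cmul M M))))))))))))) (cadd (cmul (zc (-19440)%coqZ) (cmul K (cmul K (cmul K (cmul K (cmul K (cmul K (cmul K (cmul K (cmul K (cmul K (cmul K (cmul M (cmul M (cmul M (cmul M M)))))))))))))))) (cmul (zc (-2880)%coqZ) (cmul K (cmul K (cmul K (cmul K (cmul K (cmul K (cmul K (cmul K (cmul K (cmul K (cmul K (cmul K (cmul M (cmul M (cmul M (cmul M (cmul M (cmul M M)))))))))))))))))))))
  | 10, 9 => (cadd (cmul (zc (1200)%coqZ) (cmul K (cmul K (cmul K (cmul K (cmul K (cmul K (cmul K (cmul K (cmul K (cmul M M))))))))))) (cadd (cmul (zc (-8160)%coqZ) (cmul K (cmul K (cmul K (cmul K (cmul K (cmul K (cmul K (cmul K (cmul K (cmul K (cmul M (cmul M (cmul M M)))))))))))))) (cadd (cmul (zc (-10320)%coqZ) (cmul K (cmul K (cmul K (cmul K (cmul K (cmul K (cmul K (cmul K (cmul K (cmul K (cmul K (cmul M (cmul M (cmul M (cmul M (cmul M M))))))))))))))))) (cmul (zc (-960)%coqZ) (cmul K (cmul K (cmul K (cmul K (cmul K (cmul K (cmul K (cmul K (cmul K (cmul K (cmul K (cmul K (cmul M (cmul M (cmul M (cmul M (cmul M (cmul M (cmul M M)))))))))))))))))))))))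
  | 10, 10 => (cadd (cmul (zc (-6480)%coqZ) (cmul K (cmul K (cmul K (cmul K (cmul K (cmul K (cmul K (cmul K (cmul K M)))))))))) (cmul (zc (-2880)%coqZ) (cmul K (cmul K (cmul K (cmul K (cmul K (cmul K (cmul K (cmul K (cmul K (cmul K (cmul M (cmul M M))))))))))))))
  | _, _ => czero
  end.
Definition DET (K M : algC) : algC := cmul (zc (-3072)%coqZ) (cmul K (cmul K (cmul K (cmul K (cmul K (cmul K (cmul K (cmul K (cmul K (cmul M (cmul M (cmul M (cadd cone (cmul K (cmul M M))))))))))))))).

Fixpoint sumN (f : nat -> algC) (n : nat) : algC :=
  match n with 0%N => czero | S n => cadd (sumN f n) (f n) end.

Lemma sumNE f n : sumN f n = \sum_(0 <= i < n) f i.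
Proof. elim: n => [|n IH] /=; first by rewrite big_geq. by rewrite big_nat_recr //= -IH. Qed.

Lemma key_id (K M : algC) (d : nat -> algC) (i0 : nat) : (i0 < 11)%N ->
  cmul (d i0) (DET K M) = sumN (fun j => cmul (sumN (fun i => cmul (d i) (Pm K M i j)) 11) (Adj K M j i0)) 11.
Proof.
case: i0 => [|[|[|[|[|[|[|[|[|[|[|?]]]]]]]]]]] // _; rewrite /=;
rewrite /DET; ring.
Qed.

Lemma zc_neg_neq0 p : zc (Z.neg p) != 0.
Proof.
rewrite (@zc_rep _ 0 (Pos.to_nat p)); last by lia.
rewrite sub0r oppr_eq0 pnatr_eq0; apply/eqP; lia.
Qed.

Lemma sumN_eq0 f n : (forall j, (j < n)%N -> f j = 0) -> sumN f n = 0.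
Proof.
elim: n => [|n IH] H /=; first by [].
rewrite /cadd IH ?H // ?add0r // => j Hj; apply: H; exact: ltnW.
Qed.

Lemma kernel K M (d : nat -> algC) : K != 0 -> M != 0 -> 1 + K * (M * M) != 0 ->
  (forall j, (j < 11)%N -> sumN (fun i => cmul (d i) (Pm K M i j)) 11 = 0) ->
  forall i, (i < 11)%N -> d i = 0.
Proof.
move=> hK hM hKM H i Hi.
have := @key_id K M d i Hi.
rewrite sumN_eq0; last by move=> j Hj; rewrite H // /cmul mul0r.
rewrite /cmul /DET => /eqP; rewrite mulf_eq0 => /orP [/eqP //|].
rewrite /cmul /cadd /cone !mulf_eq0 (negbTE hK) (negbTE hM) (negbTE hKM) (negbTE (zc_neg_neq0 _)).
by [].
Qed.

Arguments zc : simpl never.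

Lemma pw_exp (x : algC) n : pw x n = x ^+ n.
Proof. by elim: n => [|n IH] //=; rewrite IH exprS. Qed.

Lemma lam_uniq (j j' : 'I_11) : perm_eq (lam j) (lam j') = (j == j').
Proof.
by case: j => -[|[|[|[|[|[|[|[|[|[|[|?]]]]]]]]]]] // Hj;
   case: j' => -[|[|[|[|[|[|[|[|[|[|[|?]]]]]]]]]]] // Hj'.
Qed.

Lemma lam_pos (j : 'I_11) : all (fun i => 0 < i)%N (lam j).
Proof. by case: j => -[|[|[|[|[|[|[|[|[|[|[|?]]]]]]]]]]]. Qed.

Lemma lam_sum (j : 'I_11) : sumn (lam j) = 6%N.
Proof. by case: j => -[|[|[|[|[|[|[|[|[|[|[|?]]]]]]]]]]]. Qed.

Lemma sgn_sq (j : nat) : sgn j * sgn j = 1.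
Proof. by rewrite /sgn pw_exp -exprMn mulrNN mul1r expr1n. Qed.

Lemma coef_theta v x : coef (theta v) x = pw (-1) (size x.1) * coef v (x.1, - x.2).
Proof.
rewrite /coef /theta big_map mulr_sumr big_mkcond [RHS]big_mkcond.
apply: eq_bigr => t _ /=.
case Hp: (perm_eq t.2.1 x.1) => //=.
rewrite (perm_size Hp) pw_exp eqr_oppLR.
by case: ifP => _; rewrite // mulrC.
Qed.

Lemma coef_perm v a b z : perm_eq a b -> coef v (a, z) = coef v (b, z).
Proof.
move=> H; rewrite /coef; apply: eq_bigl => t /=.
by rewrite (permPr H).
Qed.

Lemma coefR_at_perm m r rf (j : 'I_11) s z : perm_eq (lam j) s ->
  coefR m r rf (s, z) = r j * (m%:Z == z)%:R + rf j * (- m%:Z == z)%:R.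
Proof.
move=> Hj; rewrite /coefR (bigD1 j) //= Hj /= big1 ?addr0 // => j' Hj'.
have -> : perm_eq (lam j') s = false.
  apply/negbTE; apply: contra Hj' => H.
  by rewrite -lam_uniq (permPr Hj).
by rewrite /= !mulr0 addr0.
Qed.

Lemma coefR_none m r rf s z : ~~ [exists j : 'I_11, perm_eq (lam j) s] ->
  coefR m r rf (s, z) = 0.
Proof.
move=> /existsPn H; rewrite /coefR big1 // => j _ /=.
by rewrite (negbTE (H j)) /= !mulr0 addr0.
Qed.

Lemma coefR_theta m r (x : key) :
  pw (-1) (size x.1) * coefR m r (fun j => sgn j * r j) (x.1, - x.2) =
  coefR m r (fun j => sgn j * r j) x.
Proof.
case: x => s z /=.
case: (boolP [exists j : 'I_11, perm_eq (lam j) s]) => [/existsP [j Hj]|Hn];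
  last by rewrite !coefR_none // mulr0.
rewrite !(coefR_at_perm _ _ _ _ _ _ Hj) -(perm_size Hj) -/(sgn j).
rewrite eqr_oppLR opprK (eq_sym (- _)) (eq_sym (m%:Z)).
rewrite mulrDr !mulrA sgn_sq mul1r addrC; congr (_ + _).
by rewrite eqr_oppLR.
Qed.

Fixpoint comps (f n : nat) : seq (seq nat) :=
  match f with
  | 0%N => if n == 0%N then [:: [::]] else [::]
  | S f' => if n == 0%N then [:: [::]] else
      flatten [seq [seq a :: c | c <- comps f' (n - a)] | a <- iota 1 n]
  end.

Lemma comps_mem s f : all (fun i => 0 < i)%N s -> (sumn s <= f)%N -> s \in comps f (sumn s).
Proof.
elim: s f => [|a s IH] f /=; first by case: f.
case/andP => Ha Hs; case: f => [|f]; first by rewrite leqn0 addn_eq0 (negbTE (lt0n_neq0 Ha)).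
move=> Hf /=; rewrite addn_eq0 (negbTE (lt0n_neq0 Ha)) /=.
apply/flatten_mapP; exists a.
  by rewrite mem_iota Ha /= add1n ltnS leq_addr.
rewrite addKn; apply: map_f; apply: IH => //.
move: Ha Hf; case: a => // a' _; rewrite addSn ltnS => Hf.
by apply: leq_trans Hf; rewrite leq_addl.
Qed.

Lemma cover s : all (fun i => 0 < i)%N s -> sumn s = 6%N -> exists j : 'I_11, perm_eq (lam j) s.
Proof.
move=> Hp Hs.
have Hm := @comps_mem s _ Hp (leqnn _); rewrite Hs in Hm.
have Hall : all (fun c => has (fun l => perm_eq l c) Lam) (comps 6 6) by vm_compute.
have /hasP [l Hl Hpl] := allP Hall s Hm.
have Hi : (index l Lam < 11)%N by rewrite -[11%N]/(size Lam) index_mem.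
exists (Ordinal Hi); by rewrite /lam /= nth_index.
Qed.

Lemma weight_eq (k m : nat) (z : int) (n : nat) : (z == m%:Z) || (z == - m%:Z) ->
  ((n%:R : algC) + (z ^+ 2 * (- (2 * k%:Z)))%:~R / 2 == ((- (k%:Z * m%:Z ^+ 2) + 6)%:~R)) = (n == 6)%N.
Proof.
have z2 : (z == m%:Z) || (z == - m%:Z) -> z ^+ 2 = m%:Z ^+ 2.
  by case/orP => /eqP ->; rewrite ?sqrrN.
move=> Hz; rewrite (z2 Hz).
have E1 : ((- (k%:Z * m%:Z ^+ 2) + 6)%:~R : algC) = - (k%:R * (m%:R * m%:R)) + 6%:R.
  by rewrite intrD (intr_natz 6) intrN intrM expr2 intrM !intr_natz.
have E2 : ((m%:Z ^+ 2 * (- (2 * k%:Z)))%:~R / 2 : algC) = - (k%:R * (m%:R * m%:R)).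
  rewrite intrM intrN intrM expr2 intrM !intr_natz.
  rewrite mulrN mulNr (_ : ((1 + 1)%:R : algC) = 2) // (mulrC 2) [_ * (_ * 2)]mulrA mulfK ?pnatr_eq0 //; congr (- _); exact: mulrC.
rewrite E1 E2 addrC (inj_eq (addrI _)) eqr_nat //.
Qed.

Lemma coefR_VL (k m : nat) (hm : (0 < m)%N) v (r : 'I_11 -> algC) :
  (forall x, coef v x = coefR m r (fun j => sgn j * r j) x) ->
  VLplus_weight (- (2 * k%:Z)) m ((- (k%:Z * m%:Z ^+ 2) + 6)%:~R) v.
Proof.
move=> Hv; split.
  by move=> x; rewrite coef_theta !Hv; exact: coefR_theta.
move=> x; rewrite Hv => Hne.
have [j [Hj Hz]] : exists j : 'I_11, perm_eq (lam j) x.1 /\ ((m%:Z == x.2) || (- m%:Z == x.2)).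
  case: x Hne => s z Hne.
  case: (boolP [exists j : 'I_11, perm_eq (lam j) s]) => [/existsP [j Hj]|Hn];
    last by rewrite coefR_none ?eqxx in Hne.
  exists j; split => //; move: Hne; rewrite (coefR_at_perm _ _ _ _ _ _ Hj).
  by case: (m%:Z == z); case: (- m%:Z == z) => //=; rewrite !mulr0 addr0 eqxx.
have Hz' : (x.2 == m%:Z) || (x.2 == - m%:Z) by rewrite eq_sym (eq_sym x.2).
split => //.
  by rewrite -(perm_all _ Hj) lam_pos.
by apply/eqP; rewrite weight_eq // -(perm_sumn Hj) lam_sum.
Qed.

Lemma span_coef (k m : nat) (hm : (0 < m)%N) v :
  VLplus_weight (- (2 * k%:Z)) m ((- (k%:Z * m%:Z ^+ 2) + 6)%:~R) v ->
  forall x, coef v x = coefR m (fun j => coef v (lam j, m%:Z)) (fun j => sgn j * coef v (lam j, m%:Z)) x.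
Proof.
case=> Hth Hsupp [s z].
have Hm0 : (m%:Z == - m%:Z) = false.
  by apply/negbTE; rewrite -addr_eq0 -PoszD; apply/negP => /eqP [] /eqP; rewrite addn_eq0 andbb; apply/negP; rewrite -lt0n hm.
case: (boolP [exists j : 'I_11, perm_eq (lam j) s]) => [/existsP [j Hj]|Hn]; last first.
  rewrite coefR_none //; apply/eqP; apply: contraT => Hne.
  have [Hpos Hz Hw] := Hsupp _ Hne.
  move/eqP: Hw; rewrite weight_eq // => /eqP Hs.
  have [j Hj] := @cover s Hpos Hs.
  by move/existsPn: Hn => /(_ j); rewrite Hj.
rewrite (coefR_at_perm _ _ _ _ _ _ Hj).
case: (eqVneq z m%:Z) => [->|Hzm].
  rewrite eq_sym Hm0 mulr0 addr0 mulr1.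
  by apply: coef_perm; rewrite perm_sym.
case: (eqVneq z (- m%:Z)) => [->|Hzm'].
  rewrite mulr0 add0r mulr1 -Hth coef_theta /= opprK.
  rewrite /sgn (perm_size Hj); congr (_ * _).
  by apply: coef_perm; rewrite perm_sym.
rewrite !mulr0 addr0.
apply/eqP; apply: contraT => Hne.
have [_ Hz _] := Hsupp _ Hne.
by rewrite /= (negbTE Hzm) (negbTE Hzm') in Hz.
Qed.

Arguments zc : simpl never.

Lemma all_SV (i : nat) : (i < 11)%N -> all (fun t => idx t.2.1 < 11)%N (nth [::] SV i).
Proof.
move=> Hi; have H : all (fun sv => all (fun t => idx t.2.1 < 11)%N sv) SV by vm_compute.
exact: (all_nthP [::] H i Hi).
Qed.

Lemma rowsP (i : nat) : (i < 11)%N -> forall (K M : algC) (j : 'I_11),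
  \sum_(c <- rowpoly (nth [::] SV i) true j) evc K M c = Pm K M i j /\
  \sum_(c <- rowpoly (nth [::] SV i) false j) evc K M c = sgn j * Pm K M i j.
Proof.
case: i => [|[|[|[|[|[|[|[|[|[|[|?]]]]]]]]]]] // _.
exact: rows0. exact: rows1. exact: rows2. exact: rows3. exact: rows4. exact: rows5.
exact: rows6. exact: rows7. exact: rows8. exact: rows9. exact: rows10.
Qed.

Section Main.
Variables (k m : nat).
Hypotheses (hk : (0 < k)%N) (hm : (0 < m)%N).
Let a2 : int := - (2 * k%:Z).
Let K : algC := k%:R.
Let M : algC := m%:R.
Definition sc (i : nat) : algC := if i == 10%N then 1 else sVir k.
Definition Mx : 'M[algC]_11 := \matrix_(i, j) (sc i * Pm K M i j).

Lemma fs_sum (i : nat) (Hi : (i < 11)%N) x :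
  coef (nth [::] (lemma4p2_vectors a2 m) i) x =
  sc i * \sum_(t <- nth [::] SV i | perm_eq t.2.1 x.1 && (evb m t.2.2 == x.2)) evc K M t.1.
Proof.
case: i Hi => [|[|[|[|[|[|[|[|[|[|[|?]]]]]]]]]]] // _.
- by rewrite (vec_ev0 k m) coef_vscale coef_map_evt.
- by rewrite (vec_ev1 k m) coef_vscale coef_map_evt.
- by rewrite (vec_ev2 k m) coef_vscale coef_map_evt.
- by rewrite (vec_ev3 k m) coef_vscale coef_map_evt.
- by rewrite (vec_ev4 k m) coef_vscale coef_map_evt.
- by rewrite (vec_ev5 k m) coef_vscale coef_map_evt.
- by rewrite (vec_ev6 k m) coef_vscale coef_map_evt.
- by rewrite (vec_ev7 k m) coef_vscale coef_map_evt.
- by rewrite (vec_ev8 k m) coef_vscale coef_map_evt.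
- by rewrite (vec_ev9 k m) coef_vscale coef_map_evt.
- by rewrite (vec_ev10 k m) coef_map_evt /sc /= mul1r.
Qed.

Lemma fs_row (i : 'I_11) x : coef (nth [::] (lemma4p2_vectors a2 m) i) x =
  coefR m (fun j => Mx i j) (fun j => sgn j * Mx i j) x.
Proof.
rewrite (@fs_sum i (ltn_ord i)); apply: vec_row; first exact: all_SV.
  by move=> j; rewrite mxE; congr (_ * _); case: (@rowsP i (ltn_ord i) K M j).
by move=> j; rewrite mxE mulrCA; congr (_ * _); case: (@rowsP i (ltn_ord i) K M j).
Qed.

Lemma coef_lincomb (c : 'I_11 -> algC) (fs : 'I_11 -> vec) x :
  coef (lincomb c fs) x = \sum_(i < 11) c i * coef (fs i) x.
Proof.
rewrite /lincomb {1}/coef big_flatten /= big_map big_enum /=.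
by apply: eq_bigr => i _; rewrite -coef_vscale.
Qed.

Lemma coefR_lin (c : 'I_11 -> algC) x :
  \sum_(i < 11) c i * coefR m (fun j => Mx i j) (fun j => sgn j * Mx i j) x =
  coefR m (fun j => \sum_(i < 11) c i * Mx i j) (fun j => sgn j * \sum_(i < 11) c i * Mx i j) x.
Proof.
rewrite /coefR.
under eq_bigr => i _ do rewrite mulr_sumr.
rewrite exchange_big; apply: eq_bigr => j _ /=.
rewrite mulr_sumr !mulr_suml -big_split; apply: eq_bigr => i _.
by rewrite mulrDr !mulrA (mulrC (c i) (sgn j)).
Qed.

Lemma coefR_at (r rf : 'I_11 -> algC) (j : 'I_11) : coefR m r rf (lam j, m%:Z) = r j.
Proof.
rewrite (coefR_at_perm _ _ _ _ _ _ (perm_refl (lam j))) eqxx mulr1.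
have -> : (- m%:Z == m%:Z) = false.
  apply/negbTE; rewrite eq_sym -addr_eq0 -PoszD; apply/negP => /eqP [] /eqP.
  by rewrite addn_eq0 andbb; apply/negP; rewrite -lt0n hm.
by rewrite mulr0 addr0.
Qed.

Lemma sc_neq0 (i : nat) : sc i != 0.
Proof.
rewrite /sc; case: ifP => _; first exact: oner_neq0.
rewrite /sVir invr_eq0 mulf_neq0 // ?pnatr_eq0 //.
by rewrite intrN oppr_eq0 intr_eq0 mulf_neq0 // eqz_nat -lt0n hk.
Qed.

Lemma kernel_mx (v : 'rV[algC]_11) : v *m Mx = 0 -> v = 0.
Proof.
move=> Hv.
pose d i := v 0 (inord i) * sc i.
have Hd : forall i, (i < 11)%N -> d i = 0.
  apply: (@kernel K M d).
  - by rewrite pnatr_eq0 -lt0n hk.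
  - by rewrite pnatr_eq0 -lt0n hm.
  - have -> : (1 : algC) + K * (M * M) = (1 + k * (m * m))%:R by rewrite natrD !natrM.
    by rewrite pnatr_eq0.
  move=> j Hj; rewrite sumNE.
  have := congr1 (fun w : 'M[algC]_(1, 11) => w 0 (inord j)) Hv; rewrite !mxE /= => H0; apply: (etrans _ H0).
  rewrite big_mkord; apply: eq_bigr => i _.
  by rewrite mxE /d /cmul inord_val (inordK Hj) mulrA.
apply/rowP => i; rewrite mxE.
have := Hd i (ltn_ord i); rewrite /d inord_val => /eqP.
by rewrite mulf_eq0 (negbTE (sc_neq0 i)) orbF => /eqP.
Qed.

Lemma Mx_unit : Mx \in unitmx.
Proof. by rewrite -row_free_unit; apply: inj_row_free; exact: kernel_mx. Qed.

Lemma main_sec :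
  vbasis_of (VLplus_weight (- (2 * k%:Z)) m ((- (k%:Z * m%:Z ^+ 2) + 6)%:~R))
    (fun i : 'I_11 => nth [::] (lemma4p2_vectors (- (2 * k%:Z)) m) i).
Proof.
split.
- move=> i; apply: (@coefR_VL k m hm _ (fun j => Mx i j)); exact: fs_row.
- move=> c Hc i.
  have H0 : (\row_i c i) *m Mx = 0.
    apply/rowP => j; rewrite !mxE.
    have := Hc (lam j, m%:Z); rewrite coef_lincomb.
    under eq_bigr => i' _ do rewrite fs_row.
    rewrite coefR_lin coefR_at => H0; apply: (etrans _ H0).
    by apply: eq_bigr => i' _; rewrite mxE.
  by have /rowP /(_ i) := @kernel_mx _ H0; rewrite !mxE.
- move=> v Hv.
  pose y : 'rV[algC]_11 := \row_j coef v (lam j, m%:Z).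
  pose cr := y *m invmx Mx.
  exists (fun i => cr 0 i) => x.
  rewrite coef_lincomb.
  under eq_bigr => i _ do rewrite fs_row.
  rewrite coefR_lin (@span_coef k m hm v Hv x).
  have E j : \sum_(i < 11) cr 0 i * Mx i j = coef v (lam j, m%:Z).
    have := mulmxKV Mx_unit y; rewrite -/cr => /rowP /(_ j); rewrite !mxE => <-.
    by [].
  by rewrite /coefR; apply: eq_bigr => j _; rewrite E.
Qed.
End Main.

Theorem lemma4p2 (k m : nat) (hk : (0 < k)%N) (hm : (0 < m)%N) :
  vbasis_of (VLplus_weight (- (2 * k%:Z)) m ((- (k%:Z * m%:Z ^+ 2) + 6)%:~R))
    (fun i : 'I_11 => nth [::] (lemma4p2_vectors (- (2 * k%:Z)) m) i).
Proof. exact: main_sec. Qed.
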